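(* Let $\alpha:[a,b]\to S^2$ be smooth and $f:[a,b]\to\mathbb{R}_+$ be smooth and positive, and suppose the integral curve $\beta(t)=\int_a^t f(s)\alpha(s)\,ds$ is a round $\epsilon$-suspension. Then for every $k\in[\tfrac12,\tfrac32]$ there is a positive function $g:[a,b]\to\mathbb{R}_+$ such that (i) $g(t)=f(t)$ for $t$ near $a$ and near $b$, and (ii) the integral curve $\gamma(t)=\int_a^t g(s)\alpha(s)\,ds$ is a $(k\epsilon)$-suspension with $\gamma(b)-\gamma(a)=k(\beta(b)-\beta(a))$.
   Context: $S^2$ is the unit sphere in $\mathbb{R}^3$, $\mathbb{R}_+=\{x>0\}$. A smooth arc $\beta:[a,b]\to\mathbb{R}^3$ is an $\epsilon$-suspension if it is an embedding into an isosceles triangle $\Delta$ whose base is the segment from $\beta(a)$ to $\beta(b)$ and whose height is $\epsilon$. It is a round $\epsilon$-suspension if moreover its image is a subarc of a round circle and $\|\beta'(t)\|$ is constant. *)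

(* Defs.v *)
From Stdlib Require Import Reals.
From Coquelicot Require Import Coquelicot.
Open Scope R_scope.

Definition V3 : Type := (R * R * R)%type.
Definition vx (v : V3) : R := fst (fst v).
Definition vy (v : V3) : R := snd (fst v).
Definition vz (v : V3) : R := snd v.
Definition mkV (x y z : R) : V3 := (x, y, z).
Definition vadd (u v : V3) : V3 := mkV (vx u + vx v) (vy u + vy v) (vz u + vz v).
Definition vscale (c : R) (v : V3) : V3 := mkV (c * vx v) (c * vy v) (c * vz v).
Definition vsub (u v : V3) : V3 := vadd u (vscale (-1) v).
Definition vdot (u v : V3) : R := vx u * vx v + vy u * vy v + vz u * vz v.
Definition vnorm (v : V3) : R := sqrt (vdot v v).

Definition on_S2 (v : V3) : Prop := vnorm v = 1.

(** Smooth real function (C^infinity on all of R). A smooth function on a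
    closed interval [a,b] is represented by a smooth extension to R. *)
Definition smooth (f : R -> R) : Prop := forall (n : nat) (x : R), ex_derive_n f n x.
Definition smooth3 (c : R -> V3) : Prop :=
  smooth (fun t => vx (c t)) /\ smooth (fun t => vy (c t)) /\ smooth (fun t => vz (c t)).

Definition vderiv (c : R -> V3) (t : R) : V3 :=
  mkV (Derive (fun s => vx (c s)) t) (Derive (fun s => vy (c s)) t)
      (Derive (fun s => vz (c s)) t).

Definition integral_curve (f : R -> R) (alpha : R -> V3) (a t : R) : V3 :=
  mkV (RInt (fun s => f s * vx (alpha s)) a t)
      (RInt (fun s => f s * vy (alpha s)) a t)
      (RInt (fun s => f s * vz (alpha s)) a t).

Definition isosceles_apex (A B P : V3) (eps : R) : Prop :=
  let M := vscale (1/2) (vadd A B) in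
  vdot (vsub P M) (vsub B A) = 0 /\ vnorm (vsub P M) = eps.

Definition in_triangle (A B P x : V3) : Prop :=
  exists l1 l2 l3 : R, 0 <= l1 /\ 0 <= l2 /\ 0 <= l3 /\ l1 + l2 + l3 = 1 /\
    x = vadd (vscale l1 A) (vadd (vscale l2 B) (vscale l3 P)).

(** Smooth embedding of [a,b]: smooth, injective, immersion (compact domain). *)
Definition smooth_embedding (beta : R -> V3) (a b : R) : Prop :=
  smooth3 beta /\
  (forall s t, a <= s <= b -> a <= t <= b -> beta s = beta t -> s = t) /\
  (forall t, a <= t <= b -> vderiv beta t <> mkV 0 0 0).

Definition suspension (beta : R -> V3) (a b eps : R) : Prop :=
  0 < eps /\ beta a <> beta b /\
  smooth_embedding beta a b /\
  exists P : V3, isosceles_apex (beta a) (beta b) P eps /\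
    forall t, a <= t <= b -> in_triangle (beta a) (beta b) P (beta t).

Definition round_suspension (beta : R -> V3) (a b eps : R) : Prop :=
  suspension beta a b eps /\
  (exists (C n : V3) (r : R), 0 < r /\ vnorm n = 1 /\
     forall t, a <= t <= b ->
       vnorm (vsub (beta t) C) = r /\ vdot (vsub (beta t) C) n = 0) /\
  (exists c : R, forall t, a <= t <= b -> vnorm (vderiv beta t) = c).

(* Main.v *)
Require Import Defs.
From Stdlib Require Import Reals Lra Lia Psatz Factorial.
From Coquelicot Require Import Coquelicot.
Open Scope R_scope.


Lemma Derive_n_S_ext (f : R -> R) n x : Derive_n f (S n) x = Derive_n (Derive f) n x.
Proof.
  pose proof (Derive_n_comp f n 1 x) as H. rewrite Nat.add_1_r in H. rewrite <- H.
  apply Derive_n_ext. intro t. simpl. apply Derive_ext. intro; reflexivity.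
Qed.

Lemma ex_derive_n_SS f n x : ex_derive_n f (S (S n)) x <-> ex_derive_n (Derive f) (S n) x.
Proof.
  simpl. split; intro H.
  - apply (ex_derive_ext (Derive_n f (S n))); [intro t; apply Derive_n_S_ext | exact H].
  - apply (ex_derive_ext (Derive_n (Derive f) n)); [intro t; symmetry; apply Derive_n_S_ext | exact H].
Qed.

Lemma smooth_intro f : (forall x, ex_derive f x) -> smooth (Derive f) -> smooth f.
Proof.
  intros H1 H2 n x. destruct n as [|n]; [exact I|].
  destruct n as [|n]; [exact (H1 x)|].
  apply (proj2 (ex_derive_n_SS f n x)). apply H2.
Qed.

Lemma smooth_ex_derive f : smooth f -> forall x, ex_derive f x.
Proof. intros H x. exact (H 1%nat x). Qed.

Lemma smooth_Derive f : smooth f -> smooth (Derive f).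
Proof.
  intros H n x. destruct n as [|n]; [exact I|].
  apply (proj1 (ex_derive_n_SS f n x)). apply H.
Qed.

Lemma smooth_ext f g : (forall t, f t = g t) -> smooth f -> smooth g.
Proof. intros E H n x. apply (ex_derive_n_ext f); auto. Qed.

Lemma smooth_of_derive F f : (forall x, is_derive F x (f x)) -> smooth f -> smooth F.
Proof.
  intros H Hf. apply smooth_intro.
  - intro x. eexists. apply H.
  - apply (smooth_ext f); auto. intro t. symmetry. apply is_derive_unique. apply H.
Qed.

Lemma smooth_continuous f : smooth f -> forall x, continuous f x.
Proof. intros H x. exact (@ex_derive_continuous R_AbsRing R_NormedModule f x (smooth_ex_derive f H x)). Qed.

Lemma smooth_const c : smooth (fun _ => c).
Proof. intros n x. apply ex_derive_n_const. Qed.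

Lemma smooth_plus f g : smooth f -> smooth g -> smooth (fun x => f x + g x).
Proof.
  intros Hf Hg n x. apply ex_derive_n_plus; apply filter_forall; intros; auto.
Qed.

Lemma smooth_scal c f : smooth f -> smooth (fun x => c * f x).
Proof. intros Hf n x. apply ex_derive_n_scal_l. auto. Qed.

Lemma smooth_opp f : smooth f -> smooth (fun x => - f x).
Proof. intros Hf n x. apply ex_derive_n_opp. auto. Qed.

Lemma smooth_comp_affine f p q : smooth f -> smooth (fun x => f (p * x + q)).
Proof.
  intros Hf n x.
  apply (ex_derive_n_comp_scal (fun y => f (y + q))).
  apply filter_forall. intros y k _. apply ex_derive_n_comp_trans. apply Hf.
Qed.

Lemma smooth_mult_aux : forall n f g, smooth f -> smooth g ->
  forall k x, (k <= n)%nat -> ex_derive_n (fun x => f x * g x) k x.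
Proof.
  induction n as [|n IH]; intros f g Hf Hg k x Hk.
  - replace k with 0%nat by lia. exact I.
  - destruct (Nat.le_gt_cases k n) as [Hkn|Hkn]; [apply IH; auto|].
    replace k with (S n) by lia. destruct n as [|m].
    + simpl. apply ex_derive_mult; apply smooth_ex_derive; auto.
    + apply (proj2 (ex_derive_n_SS _ m x)).
      apply (ex_derive_n_ext (fun t => Derive f t * g t + f t * Derive g t)).
      { intro t. symmetry. apply is_derive_unique.
        apply (is_derive_mult f g).
        - apply Derive_correct; apply smooth_ex_derive; auto.
        - apply Derive_correct; apply smooth_ex_derive; auto.
        - intros; apply Rmult_comm. }
      apply ex_derive_n_plus; apply filter_forall; intros y j Hj.
      * apply IH; auto. apply smooth_Derive; auto.
      * apply IH; auto. apply smooth_Derive; auto.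
Qed.

Lemma smooth_mult f g : smooth f -> smooth g -> smooth (fun x => f x * g x).
Proof. intros Hf Hg n x. apply (smooth_mult_aux n); auto. Qed.

Lemma ex_RInt_cont (h : R -> R) a b : (forall y, continuous h y) -> ex_RInt h a b.
Proof. intros H. apply (@ex_RInt_continuous R_CompleteNormedModule). intros; apply H. Qed.

Lemma RInt_deriv_cont (h : R -> R) a x : (forall y, continuous h y) ->
  is_derive (fun x => RInt h a x) x (h x).
Proof.
  intros H. apply (is_derive_RInt h (fun b => RInt h a b) a x).
  - apply filter_forall. intro y. apply (RInt_correct h a y). apply ex_RInt_cont; auto.
  - apply H.
Qed.

Lemma smooth_RInt (h : R -> R) a : smooth h -> smooth (fun x => RInt h a x).
Proof.
  intros H. apply (smooth_of_derive _ h); auto.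
  intro x. apply RInt_deriv_cont. apply smooth_continuous; auto.
Qed.

Lemma RInt_zero_ext (h : R -> R) a b : (forall x, Rmin a b < x < Rmax a b -> h x = 0) -> RInt h a b = 0.
Proof.
  intros H. rewrite (RInt_ext h (fun _ => 0)) by auto. rewrite RInt_const.
  unfold scal; simpl; unfold mult; simpl. ring.
Qed.

Lemma ball_R (x e y : R) : ball x e y -> Rabs (y - x) < e.
Proof. intro H. exact H. Qed.


Definition psi (i : nat) (x : R) : R :=
  if Rlt_dec 0 x then exp (- / x) * (/ x) ^ i else 0.

Lemma term_le_sum (u : nat -> R) n : (forall k, 0 <= u k) -> u n <= sum_f_R0 u n.
Proof.
  intros H. destruct n as [|n]; simpl; [lra|].
  assert (0 <= sum_f_R0 u n). { induction n as [|n IH]; simpl; [apply H|].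
    pose proof (H (S n)); lra. }
  lra.
Qed.

Lemma pow_le_exp n y : 0 <= y -> y ^ n <= INR (fact n) * exp y.
Proof.
  intros Hy. pose proof (exp_ge_taylor y n Hy) as H.
  pose proof (term_le_sum (fun k => y ^ k / INR (fact k)) n) as H2.
  assert (0 < INR (fact n)) by (apply lt_0_INR; apply lt_O_fact).
  assert (y ^ n / INR (fact n) <= exp y).
  { eapply Rle_trans; [apply H2|exact H]. intro k.
    apply Rdiv_le_0_compat; [apply pow_le; auto| apply lt_0_INR; apply lt_O_fact]. }
  apply (Rmult_le_compat_l (INR (fact n))) in H1; [|lra].
  field_simplify in H1; lra.
Qed.


Lemma psi_pos_form i x : 0 < x -> psi i x = exp (- / x) * (/ x) ^ i.
Proof. intro H. unfold psi. destruct (Rlt_dec 0 x); [reflexivity|lra]. Qed.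

Lemma psi_nonpos i x : x <= 0 -> psi i x = 0.
Proof. intro H. unfold psi. destruct (Rlt_dec 0 x); [lra|reflexivity]. Qed.

Lemma psi_deriv i x : is_derive (psi i) x (psi (S (S i)) x - INR i * psi (S i) x).
Proof.
  destruct (Rlt_le_dec 0 x) as [Hx|Hx].
  - rewrite !psi_pos_form by auto.
    apply (is_derive_ext_loc (fun y => exp (- / y) * (/ y) ^ i)).
    + exists (mkposreal x Hx). intros y Hy. apply ball_R in Hy. simpl in Hy.
      rewrite psi_pos_form; [reflexivity|]. apply Rabs_lt_between' in Hy. lra.
    + auto_derive. lra.
      destruct i as [|j]; simpl; [field; lra|]. field. lra.
  - rewrite !psi_nonpos by auto.
    destruct (Rle_lt_or_eq_dec _ _ Hx) as [Hx'|Hx'].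
    + apply (is_derive_ext_loc (fun _ => 0)).
      * assert (Hp : 0 < - x) by lra. exists (mkposreal (-x) Hp). intros y Hy.
        apply ball_R in Hy. simpl in Hy. apply Rabs_lt_between' in Hy.
        rewrite psi_nonpos; [reflexivity|lra].
      * replace (0 - INR i * 0) with 0 by ring. apply (is_derive_const 0).
    + subst x. apply is_derive_Reals. intros e He.
      set (F := INR (fact (S (S i)))).
      assert (HF : 0 < F) by (apply lt_0_INR; apply lt_O_fact).
      assert (Hd : 0 < e / (F + 1)) by (apply Rdiv_lt_0_compat; lra).
      exists (mkposreal _ Hd). intros h Hh0 Hh. simpl in Hh.
      rewrite (psi_nonpos i 0) by lra. rewrite Rplus_0_l.
      replace (0 - INR i * 0) with 0 by ring.
      destruct (Rlt_le_dec 0 h) as [Hp|Hn].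
      * rewrite psi_pos_form by auto.
        assert (Hy : 0 < / h) by (apply Rinv_0_lt_compat; auto).
        pose proof (pow_le_exp (S (S i)) (/ h) (Rlt_le _ _ Hy)) as HB. fold F in HB.
        assert (HE : exp (- / h) * exp (/ h) = 1).
        { rewrite <- exp_plus. replace (- / h + / h) with 0 by ring. apply exp_0. }
        assert (Hval : (exp (- / h) * (/ h) ^ i - 0) / h - 0
                       = exp (- / h) * (/ h) ^ (S (S i)) * h).
        { simpl. field. lra. }
        rewrite Hval.
        assert (H0 : 0 <= exp (- / h) * (/ h) ^ (S (S i)) * h).
        { apply Rmult_le_pos; [apply Rmult_le_pos|lra].
          apply Rlt_le, exp_pos. apply pow_le; lra. }
        rewrite Rabs_pos_eq by auto.
        assert (exp (- / h) * (/ h) ^ (S (S i)) * h <= F * h).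
        { apply Rmult_le_compat_r; [lra|].
          apply (Rle_trans _ (exp (- / h) * (F * exp (/ h)))).
          - apply Rmult_le_compat_l; [apply Rlt_le, exp_pos|auto].
          - rewrite <- Rmult_assoc, (Rmult_comm _ F), Rmult_assoc, HE. lra. }
        rewrite Rabs_pos_eq in Hh by lra.
        assert (F * h < e).
        { apply (Rle_lt_trans _ (F * (e / (F + 1)))).
          - apply Rmult_le_compat_l; lra.
          - apply (Rmult_lt_reg_r (F + 1)); [lra|]. field_simplify; nra. }
        lra.
      * rewrite psi_nonpos by auto. replace ((0 - 0) / h - 0) with 0 by (field; auto).
        rewrite Rabs_R0. auto.
Qed.

Lemma psi_smooth_aux : forall n i k x, (k <= n)%nat -> ex_derive_n (psi i) k x.
Proof.
  induction n as [|n IH]; intros i k x Hk.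
  - replace k with 0%nat by lia. exact I.
  - destruct (Nat.le_gt_cases k n) as [Hkn|Hkn]; [apply IH; auto|].
    replace k with (S n) by lia. destruct n as [|m].
    + simpl. eexists. apply psi_deriv.
    + apply (proj2 (ex_derive_n_SS _ m x)).
      apply (ex_derive_n_ext (fun t => psi (S (S i)) t - INR i * psi (S i) t)).
      { intro t. symmetry. apply is_derive_unique. apply psi_deriv. }
      apply ex_derive_n_minus; apply filter_forall; intros y j Hj.
      * apply IH; auto.
      * apply ex_derive_n_scal_l. apply IH; auto.
Qed.

Lemma psi_smooth i : smooth (psi i).
Proof. intros n x. apply (psi_smooth_aux n); auto. Qed.

Lemma psi_nonneg i x : 0 <= psi i x.
Proof.
  unfold psi. destruct (Rlt_dec 0 x); [|lra].
  apply Rmult_le_pos; [apply Rlt_le, exp_pos|apply pow_le; left; apply Rinv_0_lt_compat; auto].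
Qed.

Lemma psi_pos i x : 0 < x -> 0 < psi i x.
Proof.
  intro H. rewrite psi_pos_form by auto.
  apply Rmult_lt_0_compat; [apply exp_pos|apply pow_lt; apply Rinv_0_lt_compat; auto].
Qed.


Definition phi (t : R) : R := psi 0 t * psi 0 (1 - t).

Lemma phi_smooth : smooth phi.
Proof.
  apply smooth_mult; [apply psi_smooth|].
  apply (smooth_ext (fun t => psi 0 (-1 * t + 1))); [intro t; f_equal; ring|].
  apply smooth_comp_affine. apply psi_smooth.
Qed.

Lemma phi_cont y : continuous phi y.
Proof. apply smooth_continuous, phi_smooth. Qed.

Lemma phi_nonneg t : 0 <= phi t.
Proof. unfold phi. apply Rmult_le_pos; apply psi_nonneg. Qed.

Definition Zphi : R := RInt phi 0 1.

Lemma Zphi_pos : 0 < Zphi.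
Proof.
  unfold Zphi.
  assert (H : RInt (fun _ => 0) 0 1 < RInt phi 0 1).
  { apply RInt_lt; [lra| intros; apply phi_cont | intros; apply continuous_const |].
    intros x Hx. unfold phi. apply Rmult_lt_0_compat; apply psi_pos; lra. }
  rewrite RInt_zero_ext in H by auto. exact H.
Qed.

Definition stp (x : R) : R := / Zphi * RInt phi 0 x.

Lemma stp_smooth : smooth stp.
Proof. apply smooth_scal. apply smooth_RInt. apply phi_smooth. Qed.

Lemma stp_le0 x : x <= 0 -> stp x = 0.
Proof.
  intro H. unfold stp. rewrite RInt_zero_ext; [ring|].
  intros y Hy. rewrite Rmin_right, Rmax_left in Hy by auto.
  unfold phi. rewrite psi_nonpos by lra. ring.
Qed.

Lemma RInt_phi_split x y z : RInt phi x y + RInt phi y z = RInt phi x z.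
Proof.
  apply (RInt_Chasles phi x y z); apply ex_RInt_cont; apply phi_cont.
Qed.

Lemma stp_ge1 x : 1 <= x -> stp x = 1.
Proof.
  intro H. unfold stp. rewrite <- (RInt_phi_split 0 1 x).
  rewrite (RInt_zero_ext phi 1 x).
  - fold Zphi. pose proof Zphi_pos. field. lra.
  - intros y Hy. rewrite Rmin_left, Rmax_right in Hy by auto.
    unfold phi. rewrite (psi_nonpos 0 (1 - y)) by lra. ring.
Qed.

Lemma RInt_phi_nonneg x y : x <= y -> 0 <= RInt phi x y.
Proof.
  intro H. apply RInt_ge_0; auto. apply ex_RInt_cont, phi_cont.
  intros; apply phi_nonneg.
Qed.

Lemma stp_range x : 0 <= stp x <= 1.
Proof.
  pose proof Zphi_pos as HZ.
  destruct (Rle_dec x 0) as [H0|H0]; [rewrite stp_le0; lra|].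
  destruct (Rle_dec 1 x) as [H1|H1]; [rewrite stp_ge1; lra|].
  apply Rnot_le_lt in H0. apply Rnot_le_lt in H1.
  unfold stp. assert (0 <= RInt phi 0 x) by (apply RInt_phi_nonneg; lra).
  assert (0 <= RInt phi x 1) by (apply RInt_phi_nonneg; lra).
  pose proof (RInt_phi_split 0 x 1). fold Zphi in *.
  split.
  - apply Rmult_le_pos; [left; apply Rinv_0_lt_compat|]; lra.
  - apply (Rmult_le_reg_l Zphi); auto. rewrite <- Rmult_assoc, Rinv_r by (apply Rgt_not_eq; lra). lra.
Qed.


Lemma V3_ext (u v : V3) : vx u = vx v -> vy u = vy v -> vz u = vz v -> u = v.
Proof.
  destruct u as [[u1 u2] u3], v as [[v1 v2] v3]. unfold vx, vy, vz; simpl.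
  intros -> -> ->. reflexivity.
Qed.

Lemma sqrt_eq_sq x r : 0 <= x -> 0 <= r -> sqrt x = r -> x = r * r.
Proof. intros Hx Hr H. rewrite <- H. rewrite sqrt_sqrt; auto. Qed.

Lemma deriv_zero_of_const (F : R -> R) a b t K l :
  a < t < b -> (forall s, a < s < b -> F s = K) -> is_derive F t l -> l = 0.
Proof.
  intros Ht HF HD.
  assert (Hp : 0 < Rmin (t - a) (b - t)) by (apply Rmin_glb_lt; lra).
  assert (HD2 : is_derive (fun _ => K) t l).
  { apply (is_derive_ext_loc F); auto.
    exists (mkposreal _ Hp). intros y Hy. apply ball_R in Hy. simpl in Hy.
    apply Rabs_lt_between' in Hy. pose proof (Rmin_l (t - a) (b - t)).
    pose proof (Rmin_r (t - a) (b - t)). apply HF. lra. }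
  pose proof (is_derive_unique _ _ _ HD2) as E1.
  pose proof (is_derive_unique _ _ _ (is_derive_const K t)) as E2.
  rewrite E1 in E2. exact E2.
Qed.

Lemma gram_id (u1 u2 u3 v1 v2 v3 w1 w2 w3 : R) :
  let m1 := u2 * v3 - u3 * v2 in let m2 := u3 * v1 - u1 * v3 in let m3 := u1 * v2 - u2 * v1 in
  let wu := w1*u1+w2*u2+w3*u3 in let wv := w1*v1+w2*v2+w3*v3 in
  let uu := u1*u1+u2*u2+u3*u3 in let vv := v1*v1+v2*v2+v3*v3 in let uv := u1*v1+u2*v2+u3*v3 in
  let wm := w1*m1+w2*m2+w3*m3 in
  (m1*m1+m2*m2+m3*m3) * w1 = (wu*vv - wv*uv) * u1 + (wv*uu - wu*uv) * v1 + wm * m1 /\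
  (m1*m1+m2*m2+m3*m3) * w2 = (wu*vv - wv*uv) * u2 + (wv*uu - wu*uv) * v2 + wm * m2 /\
  (m1*m1+m2*m2+m3*m3) * w3 = (wu*vv - wv*uv) * u3 + (wv*uu - wu*uv) * v3 + wm * m3 /\
  m1*m1+m2*m2+m3*m3 = uu * vv - uv * uv.
Proof. cbv zeta. split; [ring|split; [ring|split; ring]]. Qed.

Lemma ortho_fact (u1 u2 u3 v1 v2 v3 w1 w2 w3 d1 d2 d3 R2 K : R) :
  u1*u1+u2*u2+u3*u3 = 1 -> v1*v1+v2*v2+v3*v3 = 1 -> u1*v1+u2*v2+u3*v3 = 0 ->
  w1*u1+w2*u2+w3*u3 = 0 -> w1*v1+w2*v2+w3*v3 = 0 ->
  d1*u1+d2*u2+d3*u3 = 0 -> d1*v1+d2*v2+d3*v3 = 0 ->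
  d1*d1+d2*d2+d3*d3 = R2 -> d1*w1+d2*w2+d3*w3 = K ->
  w1 * R2 = K * d1 /\ w2 * R2 = K * d2 /\ w3 * R2 = K * d3.
Proof.
  intros Hu Hv Huv Hwu Hwv Hdu Hdv HR HK.
  destruct (gram_id u1 u2 u3 v1 v2 v3 w1 w2 w3) as [W1 [W2 [W3 MM]]].
  destruct (gram_id u1 u2 u3 v1 v2 v3 d1 d2 d3) as [D1 [D2 [D3 _]]].
  cbv zeta in *.
  set (m1 := u2 * v3 - u3 * v2) in *. set (m2 := u3 * v1 - u1 * v3) in *.
  set (m3 := u1 * v2 - u2 * v1) in *.
  rewrite Hu, Hv, Huv in MM. replace (1 * 1 - 0 * 0) with 1 in MM by ring.
  rewrite MM, Hwu, Hwv, Hu, Hv, Huv in W1, W2, W3.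
  rewrite MM, Hdu, Hdv, Hu, Hv, Huv in D1, D2, D3.
  set (wm := w1 * m1 + w2 * m2 + w3 * m3) in *.
  set (dm := d1 * m1 + d2 * m2 + d3 * m3) in *.
  assert (E1 : w1 = wm * m1) by lra. assert (E2 : w2 = wm * m2) by lra.
  assert (E3 : w3 = wm * m3) by lra.
  assert (F1 : d1 = dm * m1) by lra. assert (F2 : d2 = dm * m2) by lra.
  assert (F3 : d3 = dm * m3) by lra.
  rewrite <- HR, <- HK. rewrite E1, E2, E3, F1, F2, F3.
  repeat split; ring_simplify; rewrite ?MM; nra.
Qed.

Lemma is_derive_prod (u v : R -> R) t du dv :
  is_derive u t du -> is_derive v t dv -> is_derive (fun t => u t * v t) t (du * v t + u t * dv).
Proof.
  intros Hu Hv. pose proof (is_derive_mult u v t du dv Hu Hv) as H.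
  apply H. intros; apply Rmult_comm.
Qed.

Lemma is_derive_dot3 (u1 u2 u3 v1 v2 v3 : R -> R) t du1 du2 du3 dv1 dv2 dv3 :
  is_derive u1 t du1 -> is_derive u2 t du2 -> is_derive u3 t du3 ->
  is_derive v1 t dv1 -> is_derive v2 t dv2 -> is_derive v3 t dv3 ->
  is_derive (fun t => u1 t * v1 t + u2 t * v2 t + u3 t * v3 t) t
    ((du1 * v1 t + u1 t * dv1) + (du2 * v2 t + u2 t * dv2) + (du3 * v3 t + u3 t * dv3)).
Proof.
  intros H1 H2 H3 K1 K2 K3.
  apply (is_derive_plus (fun t => u1 t * v1 t + u2 t * v2 t) (fun t => u3 t * v3 t)).
  - apply (is_derive_plus (fun t => u1 t * v1 t) (fun t => u2 t * v2 t)); apply is_derive_prod; auto.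
  - apply is_derive_prod; auto.
Qed.

Definition Co (c r tm t : R) := cos (c / r * (t - tm)).
Definition Si (c r tm t : R) := sin (c / r * (t - tm)).
Definition Asol (c r tm A0 D0 t : R) := Co c r tm t * A0 - Si c r tm t * D0 / r.
Definition Dsol (c r tm A0 D0 t : R) := Co c r tm t * D0 + r * Si c r tm t * A0.

Lemma Asol_deriv c r tm A0 D0 t : 0 < r ->
  is_derive (Asol c r tm A0 D0) t (- (c / (r * r)) * Dsol c r tm A0 D0 t).
Proof.
  intros Hr. unfold Asol, Dsol, Co, Si. auto_derive; [auto|]. unfold Rminus. field. lra.
Qed.

Lemma Dsol_deriv c r tm A0 D0 t : 0 < r ->
  is_derive (Dsol c r tm A0 D0) t (c * Asol c r tm A0 D0 t).
Proof.
  intros Hr. unfold Asol, Dsol, Co, Si. auto_derive; [auto|]. unfold Rminus. field. lra.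
Qed.

Lemma energy_comp (c r tm A0 D0 : R) (F Di Ai : R -> R) t dA :
  0 < r -> is_derive Di t (F t * Ai t) -> is_derive Ai t dA ->
  is_derive (fun t => (Di t - Dsol c r tm A0 D0 t) * (Di t - Dsol c r tm A0 D0 t)
                      + r * r * ((Ai t - Asol c r tm A0 D0 t) * (Ai t - Asol c r tm A0 D0 t))) t
    (2 * (Di t - Dsol c r tm A0 D0 t) * (F t * Ai t - c * Asol c r tm A0 D0 t)
     + r * r * (2 * (Ai t - Asol c r tm A0 D0 t) * (dA + c / (r * r) * Dsol c r tm A0 D0 t))).
Proof.
  intros Hr HD HA.
  assert (H1 : is_derive (fun t => Di t - Dsol c r tm A0 D0 t) t (F t * Ai t - c * Asol c r tm A0 D0 t)).
  { apply (is_derive_minus Di (Dsol c r tm A0 D0)); auto. apply Dsol_deriv; auto. }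
  assert (H2 : is_derive (fun t => Ai t - Asol c r tm A0 D0 t) t (dA + c / (r * r) * Dsol c r tm A0 D0 t)).
  { pose proof (is_derive_minus Ai (Asol c r tm A0 D0) t dA _ HA (Asol_deriv c r tm A0 D0 t Hr)) as H.
    eapply is_derive_ext; [intro; reflexivity|]. 
    replace (dA + c / (r * r) * Dsol c r tm A0 D0 t) with (minus dA (- (c / (r * r)) * Dsol c r tm A0 D0 t)).
    exact H. unfold minus, plus, opp; simpl. ring. }
  pose proof (is_derive_prod _ _ t _ _ H1 H1) as P1.
  pose proof (is_derive_prod _ _ t _ _ H2 H2) as P2.
  pose proof (is_derive_scal (fun t => (Ai t - Asol c r tm A0 D0 t) * (Ai t - Asol c r tm A0 D0 t)) t (r * r) _ P2) as P3.
  pose proof (is_derive_plus _ _ t _ _ P1 P3) as P4.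
  eapply is_derive_ext; [intro; reflexivity|].
  eapply (is_derive_ext _ _ t _ (fun _ => eq_refl)) in P4.
  replace (2 * (Di t - Dsol c r tm A0 D0 t) * (F t * Ai t - c * Asol c r tm A0 D0 t) +
   r * r * (2 * (Ai t - Asol c r tm A0 D0 t) * (dA + c / (r * r) * Dsol c r tm A0 D0 t)))
   with (plus ((F t * Ai t - c * Asol c r tm A0 D0 t) * (Di t - Dsol c r tm A0 D0 t) +
       (Di t - Dsol c r tm A0 D0 t) * (F t * Ai t - c * Asol c r tm A0 D0 t))
       (scal (r * r) ((dA + c / (r * r) * Dsol c r tm A0 D0 t) * (Ai t - Asol c r tm A0 D0 t) +
         (Ai t - Asol c r tm A0 D0 t) * (dA + c / (r * r) * Dsol c r tm A0 D0 t)))).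
  - exact P4.
  - unfold plus, scal; simpl; unfold mult; simpl. ring.
Qed.

Lemma continuity_of_derive (E dE : R -> R) x : is_derive E x (dE x) -> continuity_pt E x.
Proof.
  intro H. apply continuity_pt_filterlim.
  apply (@ex_derive_continuous R_AbsRing R_NormedModule). eexists; eauto.
Qed.

Lemma const_of_deriv (E dE : R -> R) a b s t :
  (forall x, is_derive E x (dE x)) -> (forall x, a < x < b -> dE x = 0) ->
  a <= s <= b -> a <= t <= b -> E t = E s.
Proof.
  intros HD H0 Hs Ht.
  destruct (MVT_gen E s t (fun _ => 0)) as [z [Hz Heq]].
  - intros x Hx. rewrite <- (H0 x). apply HD.
    assert (a <= Rmin s t) by (apply Rmin_glb; lra).
    assert (Rmax s t <= b) by (apply Rmax_lub; lra). lra.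
  - intros x _. eapply continuity_of_derive. apply HD.
  - lra.
Qed.


Lemma sq_zero x : x * x = 0 -> x = 0.
Proof. intro H. destruct (Rmult_integral _ _ H); auto. Qed.

Lemma sum6_zero x1 x2 x3 x4 x5 x6 k : 0 < k ->
  x1 * x1 + k * (x2 * x2) + (x3 * x3 + k * (x4 * x4)) + (x5 * x5 + k * (x6 * x6)) = 0 ->
  x1 = 0 /\ x2 = 0 /\ x3 = 0 /\ x4 = 0 /\ x5 = 0 /\ x6 = 0.
Proof.
  intros Hk H.
  assert (P1 : 0 <= x1 * x1) by nra. assert (P2 : 0 <= k * (x2 * x2)) by nra.
  assert (P3 : 0 <= x3 * x3) by nra. assert (P4 : 0 <= k * (x4 * x4)) by nra.
  assert (P5 : 0 <= x5 * x5) by nra. assert (P6 : 0 <= k * (x6 * x6)) by nra.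
  assert (Q2 : x2 * x2 = 0) by (apply (Rmult_eq_reg_l k); [|lra]; rewrite Rmult_0_r; lra).
  assert (Q4 : x4 * x4 = 0) by (apply (Rmult_eq_reg_l k); [|lra]; rewrite Rmult_0_r; lra).
  assert (Q6 : x6 * x6 = 0) by (apply (Rmult_eq_reg_l k); [|lra]; rewrite Rmult_0_r; lra).
  repeat split; apply sq_zero; lra.
Qed.

Lemma circle_ode (a b c r : R) (F D1 D2 D3 A1 A2 A3 : R -> R) (n1 n2 n3 : R) :
  a < b -> 0 < c -> 0 < r ->
  (forall t, is_derive D1 t (F t * A1 t)) ->
  (forall t, is_derive D2 t (F t * A2 t)) ->
  (forall t, is_derive D3 t (F t * A3 t)) ->
  (forall t, ex_derive A1 t) -> (forall t, ex_derive A2 t) -> (forall t, ex_derive A3 t) ->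
  (forall t, a <= t <= b -> F t = c) ->
  (forall t, a <= t <= b -> D1 t * D1 t + D2 t * D2 t + D3 t * D3 t = r * r) ->
  (forall t, a <= t <= b -> D1 t * n1 + D2 t * n2 + D3 t * n3 = 0) ->
  n1 * n1 + n2 * n2 + n3 * n3 = 1 ->
  (forall t, a <= t <= b -> A1 t * A1 t + A2 t * A2 t + A3 t * A3 t = 1) ->
  (forall t, a < t < b -> D1 t * A1 t + D2 t * A2 t + D3 t * A3 t = 0) /\
  (forall t, a <= t <= b ->
     let tm := (a + b) / 2 in
     A1 t = Asol c r tm (A1 tm) (D1 tm) t /\ A2 t = Asol c r tm (A2 tm) (D2 tm) t /\
     A3 t = Asol c r tm (A3 tm) (D3 tm) t /\
     D1 t = Dsol c r tm (A1 tm) (D1 tm) t /\ D2 t = Dsol c r tm (A2 tm) (D2 tm) t /\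
     D3 t = Dsol c r tm (A3 tm) (D3 tm) t).
Proof.
  intros Hab Hc Hr HD1 HD2 HD3 HA1 HA2 HA3 HF Hrad Hn Hnn Hunit.
  assert (dA1 : forall t, is_derive A1 t (Derive A1 t)) by (intro; apply Derive_correct; auto).
  assert (dA2 : forall t, is_derive A2 t (Derive A2 t)) by (intro; apply Derive_correct; auto).
  assert (dA3 : forall t, is_derive A3 t (Derive A3 t)) by (intro; apply Derive_correct; auto).
  assert (Hcn : forall (k : R) t, is_derive (fun _ => k) t 0) by (intros; apply (is_derive_const k)).
  assert (DA : forall t, a < t < b -> D1 t * A1 t + D2 t * A2 t + D3 t * A3 t = 0).
  { intros t Ht.
    pose proof (is_derive_dot3 D1 D2 D3 D1 D2 D3 t _ _ _ _ _ _ (HD1 t) (HD2 t) (HD3 t) (HD1 t) (HD2 t) (HD3 t)) as H.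
    apply (deriv_zero_of_const _ a b t (r * r)) in H; auto.
    - rewrite HF in H by lra. nra.
    - intros; apply Hrad; lra. }
  assert (An : forall t, a < t < b -> A1 t * n1 + A2 t * n2 + A3 t * n3 = 0).
  { intros t Ht.
    pose proof (is_derive_dot3 D1 D2 D3 (fun _ => n1) (fun _ => n2) (fun _ => n3) t _ _ _ _ _ _ (HD1 t) (HD2 t) (HD3 t) (Hcn n1 t) (Hcn n2 t) (Hcn n3 t)) as H.
    apply (deriv_zero_of_const _ a b t 0) in H; auto.
    - rewrite HF in H by lra. nra.
    - intros; apply Hn; lra. }
  assert (DdA : forall t, a < t < b -> D1 t * Derive A1 t + D2 t * Derive A2 t + D3 t * Derive A3 t = - c).
  { intros t Ht.
    pose proof (is_derive_dot3 D1 D2 D3 A1 A2 A3 t _ _ _ _ _ _ (HD1 t) (HD2 t) (HD3 t) (dA1 t) (dA2 t) (dA3 t)) as H.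
    apply (deriv_zero_of_const _ a b t 0) in H; auto.
    rewrite HF in H by lra. pose proof (Hunit t ltac:(lra)). nra. }
  assert (AdA : forall t, a < t < b -> Derive A1 t * A1 t + Derive A2 t * A2 t + Derive A3 t * A3 t = 0).
  { intros t Ht.
    pose proof (is_derive_dot3 A1 A2 A3 A1 A2 A3 t _ _ _ _ _ _ (dA1 t) (dA2 t) (dA3 t) (dA1 t) (dA2 t) (dA3 t)) as H.
    apply (deriv_zero_of_const _ a b t 1) in H; auto.
    - nra.
    - intros; apply Hunit; lra. }
  assert (dAn : forall t, a < t < b -> Derive A1 t * n1 + Derive A2 t * n2 + Derive A3 t * n3 = 0).
  { intros t Ht.
    pose proof (is_derive_dot3 A1 A2 A3 (fun _ => n1) (fun _ => n2) (fun _ => n3) t _ _ _ _ _ _ (dA1 t) (dA2 t) (dA3 t) (Hcn n1 t) (Hcn n2 t) (Hcn n3 t)) as H.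
    apply (deriv_zero_of_const _ a b t 0) in H; auto.
    nra. }
  assert (ODE : forall t, a < t < b ->
     Derive A1 t * (r * r) = - c * D1 t /\ Derive A2 t * (r * r) = - c * D2 t /\
     Derive A3 t * (r * r) = - c * D3 t).
  { intros t Ht. apply (ortho_fact (A1 t) (A2 t) (A3 t) n1 n2 n3); auto.
    - apply Hunit; lra.
    - apply Hn; lra.
    - apply Hrad; lra. }
  split; [exact DA|].
  intros t Ht tm.
  assert (Htm : a <= tm <= b) by (unfold tm; lra).
  set (E := fun t =>
    ((D1 t - Dsol c r tm (A1 tm) (D1 tm) t) * (D1 t - Dsol c r tm (A1 tm) (D1 tm) t)
      + r * r * ((A1 t - Asol c r tm (A1 tm) (D1 tm) t) * (A1 t - Asol c r tm (A1 tm) (D1 tm) t)))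
    + ((D2 t - Dsol c r tm (A2 tm) (D2 tm) t) * (D2 t - Dsol c r tm (A2 tm) (D2 tm) t)
      + r * r * ((A2 t - Asol c r tm (A2 tm) (D2 tm) t) * (A2 t - Asol c r tm (A2 tm) (D2 tm) t)))
    + ((D3 t - Dsol c r tm (A3 tm) (D3 tm) t) * (D3 t - Dsol c r tm (A3 tm) (D3 tm) t)
      + r * r * ((A3 t - Asol c r tm (A3 tm) (D3 tm) t) * (A3 t - Asol c r tm (A3 tm) (D3 tm) t)))).
  set (dE := fun t =>
    (2 * (D1 t - Dsol c r tm (A1 tm) (D1 tm) t) * (F t * A1 t - c * Asol c r tm (A1 tm) (D1 tm) t)
     + r * r * (2 * (A1 t - Asol c r tm (A1 tm) (D1 tm) t) * (Derive A1 t + c / (r * r) * Dsol c r tm (A1 tm) (D1 tm) t)))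
    + (2 * (D2 t - Dsol c r tm (A2 tm) (D2 tm) t) * (F t * A2 t - c * Asol c r tm (A2 tm) (D2 tm) t)
     + r * r * (2 * (A2 t - Asol c r tm (A2 tm) (D2 tm) t) * (Derive A2 t + c / (r * r) * Dsol c r tm (A2 tm) (D2 tm) t)))
    + (2 * (D3 t - Dsol c r tm (A3 tm) (D3 tm) t) * (F t * A3 t - c * Asol c r tm (A3 tm) (D3 tm) t)
     + r * r * (2 * (A3 t - Asol c r tm (A3 tm) (D3 tm) t) * (Derive A3 t + c / (r * r) * Dsol c r tm (A3 tm) (D3 tm) t)))).
  assert (HE : forall x, is_derive E x (dE x)).
  { intro x.
    pose proof (energy_comp c r tm (A1 tm) (D1 tm) F D1 A1 x _ Hr (HD1 x) (dA1 x)) as P1.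
    pose proof (energy_comp c r tm (A2 tm) (D2 tm) F D2 A2 x _ Hr (HD2 x) (dA2 x)) as P2.
    pose proof (energy_comp c r tm (A3 tm) (D3 tm) F D3 A3 x _ Hr (HD3 x) (dA3 x)) as P3.
    exact (is_derive_plus _ _ x _ _ (is_derive_plus _ _ x _ _ P1 P2) P3). }
  assert (HdE : forall x, a < x < b -> dE x = 0).
  { intros x Hx. destruct (ODE x Hx) as [O1 [O2 O3]]. unfold dE. rewrite HF by lra.
    assert (Derive A1 x = - c * D1 x / (r * r)) by (apply (Rmult_eq_reg_r (r * r)); [rewrite O1; field; lra|apply Rgt_not_eq; nra]).
    assert (Derive A2 x = - c * D2 x / (r * r)) by (apply (Rmult_eq_reg_r (r * r)); [rewrite O2; field; lra|apply Rgt_not_eq; nra]).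
    assert (Derive A3 x = - c * D3 x / (r * r)) by (apply (Rmult_eq_reg_r (r * r)); [rewrite O3; field; lra|apply Rgt_not_eq; nra]).
    rewrite H, H0, H1. field. lra. }
  pose proof (const_of_deriv E dE a b tm t HE HdE Htm Ht) as Et.
  assert (E0 : E tm = 0).
  { unfold E; cbv beta. unfold Asol, Dsol, Co, Si. rewrite Rminus_diag, Rmult_0_r, cos_0, sin_0. unfold Rdiv. ring. }
  rewrite E0 in Et. unfold E in Et. cbv beta in Et.
  assert (Hrr : 0 < r * r) by nra.
  destruct (sum6_zero _ _ _ _ _ _ _ Hrr Et) as [Z1 [Z2 [Z3 [Z4 [Z5 Z6]]]]].
  repeat split; lra.
Qed.


Lemma trig_ineq_limit (th K eps : R) : 0 < th -> th < PI ->
  (forall s, - th <= s <= th -> K * (cos s - cos th) <= eps * (sin th - sin s)) ->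
  K * sin th <= eps * cos th.
Proof.
  intros Hth Hpi H.
  assert (Hv : forall v, th / 2 <= v < th -> K * sin v <= eps * cos v).
  { intros v Hv. set (w := th - v).
    assert (Hw : 0 < sin w) by (apply sin_gt_0; unfold w; lra).
    pose proof (H (v - w) ltac:(unfold w; lra)) as H1.
    replace th with (v + w) in H1 by (unfold w; ring).
    rewrite cos_minus, cos_plus, sin_minus, sin_plus in H1.
    apply (Rmult_le_reg_r (2 * sin w)); [lra|]. nra. }
  set (h := fun v => eps * cos v - K * sin v).
  assert (Hc : continuity_pt h th).
  { apply (continuity_of_derive h (fun v => - eps * sin v - K * cos v)).
    unfold h. auto_derive; auto. ring. }
  destruct (Rle_lt_dec 0 (h th)) as [Hp|Hn]; [unfold h in Hp; lra|].
  exfalso.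
  unfold continuity_pt, continue_in, limit1_in, limit_in in Hc. simpl in Hc.
  destruct (Hc (- h th) ltac:(lra)) as [alp [Halp Hx]].
  set (m := Rmin alp (th / 2)).
  assert (Hm1 : m <= alp) by apply Rmin_l. assert (Hm2 : m <= th / 2) by apply Rmin_r.
  assert (Hm0 : 0 < m) by (apply Rmin_glb_lt; lra).
  pose proof (Hx (th - m / 2)) as Hx1.
  unfold R_dist in Hx1.
  assert (Hd : Rabs (th - m / 2 - th) < alp).
  { rewrite Rabs_left by lra. lra. }
  assert (Hneq : th <> th - m / 2) by lra.
  specialize (Hx1 (conj (conj I Hneq) Hd)).
  pose proof (Hv (th - m / 2) ltac:(lra)) as Hv1.
  apply Rabs_lt_between' in Hx1. unfold h in Hx1. lra.
Qed.

Lemma IC_x g alpha a t : vx (integral_curve g alpha a t) = RInt (fun s => g s * vx (alpha s)) a t.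
Proof. reflexivity. Qed.
Lemma IC_y g alpha a t : vy (integral_curve g alpha a t) = RInt (fun s => g s * vy (alpha s)) a t.
Proof. reflexivity. Qed.
Lemma IC_z g alpha a t : vz (integral_curve g alpha a t) = RInt (fun s => g s * vz (alpha s)) a t.
Proof. reflexivity. Qed.

Lemma IC_at_a g alpha a : integral_curve g alpha a a = mkV 0 0 0.
Proof. unfold integral_curve. rewrite !RInt_point. reflexivity. Qed.

Lemma IC_deriv_comp (g h : R -> R) a t : smooth g -> smooth h ->
  is_derive (fun t => RInt (fun s => g s * h s) a t) t (g t * h t).
Proof.
  intros Hg Hh. apply (RInt_deriv_cont (fun s => g s * h s)).
  apply smooth_continuous. apply smooth_mult; auto.
Qed.

Lemma vderiv_IC g alpha a t : smooth g -> smooth3 alpha ->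
  vderiv (integral_curve g alpha a) t = mkV (g t * vx (alpha t)) (g t * vy (alpha t)) (g t * vz (alpha t)).
Proof.
  intros Hg [H1 [H2 H3]]. unfold vderiv.
  apply V3_ext; unfold vx at 1, vy at 1, vz at 1; unfold mkV; simpl; apply is_derive_unique.
  - apply (IC_deriv_comp g (fun s => vx (alpha s))); auto.
  - apply (IC_deriv_comp g (fun s => vy (alpha s))); auto.
  - apply (IC_deriv_comp g (fun s => vz (alpha s))); auto.
Qed.

Lemma dot_nonneg v : 0 <= vdot v v.
Proof. unfold vdot. nra. Qed.

Lemma norm_eq v r : 0 <= r -> vnorm v = r -> vdot v v = r * r.
Proof. intros Hr H. apply sqrt_eq_sq; auto. apply dot_nonneg. Qed.

Lemma vdot_sub_l u v w : vdot (vsub u v) w =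
  (vx u - vx v) * vx w + (vy u - vy v) * vy w + (vz u - vz v) * vz w.
Proof. unfold vdot, vsub, vadd, vscale, mkV, vx, vy, vz; simpl. ring. Qed.

Lemma vsub_comp u v : vx (vsub u v) = vx u - vx v /\ vy (vsub u v) = vy u - vy v /\ vz (vsub u v) = vz u - vz v.
Proof. unfold vsub, vadd, vscale, mkV, vx, vy, vz; simpl. repeat split; ring. Qed.

Lemma is_derive_sub_const (u : R -> R) k t du : is_derive u t du -> is_derive (fun t => u t - k) t du.
Proof.
  intro H. pose proof (is_derive_minus u (fun _ => k) t du 0 H (is_derive_const k t)) as H2.
  replace du with (minus du 0) by (unfold minus, plus, opp; simpl; ring). exact H2.
Qed.

Lemma tri_alg (a1 a2 a3 d1 d2 d3 P1 P2 P3 r s K1 K2 l2 l3 : R) :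
  a1*a1 + a2*a2 + a3*a3 = 1 -> d1*d1 + d2*d2 + d3*d3 = r*r -> d1*a1 + d2*a2 + d3*a3 = 0 ->
  P1*a1 + P2*a2 + P3*a3 = r*s ->
  K1*d1 + r*K2*a1 = l2*(2*r*s*a1) + l3*P1 ->
  K1*d2 + r*K2*a2 = l2*(2*r*s*a2) + l3*P2 ->
  K1*d3 + r*K2*a3 = l2*(2*r*s*a3) + l3*P3 ->
  l3 * (P1*d1 + P2*d2 + P3*d3) = K1 * (r*r) /\ r * K2 = 2 * l2 * r * s + l3 * r * s.
Proof.
  intros Ha Hd Hda HPa E1 E2 E3. split.
  - assert (H : d1*(K1*d1 + r*K2*a1) + d2*(K1*d2 + r*K2*a2) + d3*(K1*d3 + r*K2*a3)
              = d1*(l2*(2*r*s*a1) + l3*P1) + d2*(l2*(2*r*s*a2) + l3*P2) + d3*(l2*(2*r*s*a3) + l3*P3))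
      by (rewrite E1, E2, E3; reflexivity).
    replace (d1*(K1*d1 + r*K2*a1) + d2*(K1*d2 + r*K2*a2) + d3*(K1*d3 + r*K2*a3))
      with (K1*(d1*d1 + d2*d2 + d3*d3) + r*K2*(d1*a1 + d2*a2 + d3*a3)) in H by ring.
    replace (d1*(l2*(2*r*s*a1) + l3*P1) + d2*(l2*(2*r*s*a2) + l3*P2) + d3*(l2*(2*r*s*a3) + l3*P3))
      with (2*l2*r*s*(d1*a1 + d2*a2 + d3*a3) + l3*(P1*d1 + P2*d2 + P3*d3)) in H by ring.
    rewrite Hd, Hda in H. lra.
  - assert (H : a1*(K1*d1 + r*K2*a1) + a2*(K1*d2 + r*K2*a2) + a3*(K1*d3 + r*K2*a3)
              = a1*(l2*(2*r*s*a1) + l3*P1) + a2*(l2*(2*r*s*a2) + l3*P2) + a3*(l2*(2*r*s*a3) + l3*P3))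
      by (rewrite E1, E2, E3; reflexivity).
    replace (a1*(K1*d1 + r*K2*a1) + a2*(K1*d2 + r*K2*a2) + a3*(K1*d3 + r*K2*a3))
      with (K1*(d1*a1 + d2*a2 + d3*a3) + r*K2*(a1*a1 + a2*a2 + a3*a3)) in H by ring.
    replace (a1*(l2*(2*r*s*a1) + l3*P1) + a2*(l2*(2*r*s*a2) + l3*P2) + a3*(l2*(2*r*s*a3) + l3*P3))
      with (2*l2*r*s*(a1*a1 + a2*a2 + a3*a3) + l3*(P1*a1 + P2*a2 + P3*a3)) in H by ring.
    rewrite Ha, Hda, HPa in H. lra.
Qed.

Lemma tri_ineq (r s K1 K2 l1 l2 l3 p eps : R) :
  0 < r -> 0 < s -> 0 < p -> p <= eps * r -> 0 <= l1 -> 0 <= l2 -> 0 <= l3 -> l1 + l2 + l3 = 1 ->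
  l3 * p = K1 * (r * r) -> r * K2 = 2 * l2 * r * s + l3 * r * s ->
  0 <= K1 /\ r * s * K1 <= eps * (2 * s - K2).
Proof.
  intros Hr Hs Hp Hpe H1 H2 H3 Hsum E1 E2.
  assert (EK2 : K2 = 2 * l2 * s + l3 * s).
  { apply (Rmult_eq_reg_l r); [|lra]. rewrite E2. ring. }
  assert (HK1 : 0 <= K1).
  { assert (0 <= K1 * (r * r)) by (rewrite <- E1; nra).
    assert (0 < r * r) by nra. nra. }
  split; auto.
  assert (A1 : l3 * s <= 2 * s - K2) by nra.
  assert (A2 : K1 * (r * r) * s <= p * (2 * s - K2)) by (rewrite <- E1; nra).
  assert (A3 : 0 <= 2 * s - K2) by nra.
  assert (A4 : p * (2 * s - K2) <= eps * r * (2 * s - K2)) by nra.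
  assert (A5 : r * (r * s * K1) <= r * (eps * (2 * s - K2))) by nra.
  apply (Rmult_le_reg_l r); auto.
Qed.


Lemma geometry (a b eps : R) (alpha : R -> V3) (f : R -> R) :
  a < b -> smooth3 alpha ->
  (forall t, a <= t <= b -> on_S2 (alpha t)) ->
  smooth f -> (forall t, a <= t <= b -> 0 < f t) ->
  round_suspension (integral_curve f alpha a) a b eps ->
  exists c w (e1 e2 : V3),
    0 < c /\ 0 < w /\ 0 < eps /\ w * (b - a) / 2 < PI / 2 /\
    c / w * sin (w * (b - a) / 2) * sin (w * (b - a) / 2) <= eps * cos (w * (b - a) / 2) /\
    vdot e1 e1 = 1 /\ vdot e2 e2 = 1 /\ vdot e1 e2 = 0 /\
    (forall t, a <= t <= b -> f t = c) /\
    (forall t, a <= t <= b -> alpha t =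
       vadd (vscale (cos (w * (t - (a + b) / 2))) e1) (vscale (- sin (w * (t - (a + b) / 2))) e2)).
Proof.
  intros Hab Hsm HS2 Hf Hfpos Hround.
  destruct Hround as [Hsusp [[C [n [r [Hr [Hn Hcirc]]]]] [c0 Hspeed]]].
  destruct Hsusp as [Heps [Hne [[_ [Hinj _]] [P [Hiso Htri]]]]].
  set (beta := integral_curve f alpha a) in *.
  pose proof Hsm as [Sx [Sy Sz]].
  set (A1 := fun t => vx (alpha t)). set (A2 := fun t => vy (alpha t)).
  set (A3 := fun t => vz (alpha t)).
  assert (Hunit : forall t, a <= t <= b -> A1 t * A1 t + A2 t * A2 t + A3 t * A3 t = 1).
  { intros t Ht. pose proof (norm_eq _ 1 ltac:(lra) (HS2 t Ht)) as H. unfold vdot in H.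
    unfold A1, A2, A3. lra. }
  assert (Hc0 : forall t, a <= t <= b -> f t = c0).
  { intros t Ht. pose proof (Hspeed t Ht) as H. unfold beta in H.
    rewrite vderiv_IC in H by auto. unfold vnorm, vdot, mkV, vx, vy, vz in H; simpl in H.
    pose proof (Hunit t Ht) as U. unfold A1, A2, A3 in U.
    replace (f t * fst (fst (alpha t)) * (f t * fst (fst (alpha t))) +
      f t * snd (fst (alpha t)) * (f t * snd (fst (alpha t))) +
      f t * snd (alpha t) * (f t * snd (alpha t))) with (f t * f t) in H.
    - rewrite sqrt_square in H; auto. pose proof (Hfpos t Ht); lra.
    - unfold vx, vy, vz in U. transitivity (f t * f t * 1); [ring|]. rewrite <- U. ring. }
  set (c := c0).
  assert (Hc : 0 < c) by (unfold c; rewrite <- (Hc0 a); [apply Hfpos|]; lra).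
  set (D1 := fun t => vx (beta t) - vx C). set (D2 := fun t => vy (beta t) - vy C).
  set (D3 := fun t => vz (beta t) - vz C).
  assert (HD1 : forall t, is_derive D1 t (f t * A1 t)).
  { intro t. apply is_derive_sub_const. apply IC_deriv_comp; auto. }
  assert (HD2 : forall t, is_derive D2 t (f t * A2 t)).
  { intro t. apply is_derive_sub_const. apply IC_deriv_comp; auto. }
  assert (HD3 : forall t, is_derive D3 t (f t * A3 t)).
  { intro t. apply is_derive_sub_const. apply IC_deriv_comp; auto. }
  assert (Hrad : forall t, a <= t <= b -> D1 t * D1 t + D2 t * D2 t + D3 t * D3 t = r * r).
  { intros t Ht. destruct (Hcirc t Ht) as [H _]. apply norm_eq in H; [|lra].
    rewrite vdot_sub_l in H. destruct (vsub_comp (beta t) C) as [E1 [E2 E3]].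
    rewrite E1, E2, E3 in H. exact H. }
  assert (Hpl : forall t, a <= t <= b -> D1 t * vx n + D2 t * vy n + D3 t * vz n = 0).
  { intros t Ht. destruct (Hcirc t Ht) as [_ H]. rewrite vdot_sub_l in H. exact H. }
  assert (Hnn : vx n * vx n + vy n * vy n + vz n * vz n = 1).
  { apply norm_eq in Hn; [|lra]. unfold vdot in Hn. lra. }
  destruct (circle_ode a b c r f D1 D2 D3 A1 A2 A3 (vx n) (vy n) (vz n) Hab Hc Hr HD1 HD2 HD3
    (smooth_ex_derive _ Sx) (smooth_ex_derive _ Sy) (smooth_ex_derive _ Sz) Hc0 Hrad Hpl Hnn Hunit)
    as [HDA Hsol].
  set (tm := (a + b) / 2) in *.
  assert (Htm : a < tm < b) by (unfold tm; lra).
  set (w := c / r).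
  assert (Hw : 0 < w) by (unfold w; apply Rdiv_lt_0_compat; auto).
  set (th := w * (b - a) / 2).
  assert (Hth : 0 < th) by (unfold th; nra).
  assert (OA : A1 tm * A1 tm + A2 tm * A2 tm + A3 tm * A3 tm = 1) by (apply Hunit; lra).
  assert (OD : D1 tm * D1 tm + D2 tm * D2 tm + D3 tm * D3 tm = r * r) by (apply Hrad; lra).
  assert (OAD : D1 tm * A1 tm + D2 tm * A2 tm + D3 tm * A3 tm = 0) by (apply HDA; lra).
  set (a1 := A1 tm) in *. set (a2 := A2 tm) in *. set (a3 := A3 tm) in *.
  set (d1 := D1 tm) in *. set (d2 := D2 tm) in *. set (d3 := D3 tm) in *.
  assert (Hba : beta a = mkV 0 0 0) by (unfold beta; apply IC_at_a).
  assert (Wa : w * (a - tm) = - th) by (unfold th, tm; field).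
  assert (Wb : w * (b - tm) = th) by (unfold th, tm; field).
  assert (Hrep : forall t, a <= t <= b ->
    vx (beta t) = (cos (w * (t - tm)) - cos th) * d1 + r * (sin (w * (t - tm)) + sin th) * a1 /\
    vy (beta t) = (cos (w * (t - tm)) - cos th) * d2 + r * (sin (w * (t - tm)) + sin th) * a2 /\
    vz (beta t) = (cos (w * (t - tm)) - cos th) * d3 + r * (sin (w * (t - tm)) + sin th) * a3).
  { intros t Ht.
    destruct (Hsol t Ht) as [_ [_ [_ [S1 [S2 S3]]]]].
    destruct (Hsol a ltac:(lra)) as [_ [_ [_ [T1 [T2 T3]]]]].
    assert (B1 : vx (beta t) = D1 t - D1 a) by (unfold D1; rewrite Hba; change (vx (mkV 0 0 0)) with 0; ring).
    assert (B2 : vy (beta t) = D2 t - D2 a) by (unfold D2; rewrite Hba; change (vy (mkV 0 0 0)) with 0; ring).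
    assert (B3 : vz (beta t) = D3 t - D3 a) by (unfold D3; rewrite Hba; change (vz (mkV 0 0 0)) with 0; ring).
    rewrite B1, B2, B3, S1, S2, S3, T1, T2, T3.
    unfold Dsol, Co, Si. fold w. rewrite Wa, cos_neg, sin_neg.
    unfold a1, a2, a3, d1, d2, d3. repeat split; ring. }
  assert (Hpi : th < PI).
  { destruct (Rlt_le_dec th PI) as [H|H]; auto. exfalso.
    set (t2 := a + 2 * PI / w).
    assert (Ht2 : a < t2 <= b).
    { unfold t2. split.
      - assert (0 < 2 * PI / w) by (apply Rdiv_lt_0_compat; [pose proof PI_RGT_0|]; lra). lra.
      - assert (2 * PI / w <= b - a); [|lra].
        apply (Rmult_le_reg_l w); auto. unfold th in H. field_simplify; [lra|lra]. }
    assert (Wt2 : w * (t2 - tm) = - th + 2 * INR 1 * PI).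
    { replace (w * (t2 - tm)) with (w * (a - tm) + 2 * PI) by (unfold t2; field; lra).
      rewrite Wa. simpl. ring. }
    assert (Heq : beta t2 = beta a).
    { destruct (Hrep t2 ltac:(lra)) as [X1 [X2 X3]]. rewrite Wt2, cos_period, sin_period, cos_neg, sin_neg in X1, X2, X3.
      rewrite Hba. apply V3_ext; [rewrite X1|rewrite X2|rewrite X3]; unfold vx, vy, vz, mkV; simpl; ring. }
    pose proof (Hinj t2 a ltac:(lra) ltac:(lra) Heq). lra. }
  assert (Hs : 0 < sin th) by (apply sin_gt_0; auto).
  assert (Hbb : beta b = mkV (2 * r * sin th * a1) (2 * r * sin th * a2) (2 * r * sin th * a3)).
  { destruct (Hrep b ltac:(lra)) as [X1 [X2 X3]]. rewrite Wb in X1, X2, X3.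
    apply V3_ext; [rewrite X1|rewrite X2|rewrite X3]; unfold vx, vy, vz, mkV; simpl; ring. }
  unfold isosceles_apex in Hiso. rewrite Hba, Hbb in Hiso. destruct Hiso as [Hperp Hlen].
  destruct P as [[P1 P2] P3].
  unfold vdot, vsub, vadd, vscale, mkV, vx, vy, vz in Hperp; simpl in Hperp.
  apply norm_eq in Hlen; [|lra].
  unfold vdot, vsub, vadd, vscale, mkV, vx, vy, vz in Hlen; simpl in Hlen.
  assert (HPa : P1 * a1 + P2 * a2 + P3 * a3 = r * sin th).
  { assert (H : 2 * r * sin th * ((P1 * a1 + P2 * a2 + P3 * a3) - r * sin th * (a1 * a1 + a2 * a2 + a3 * a3)) = 0)
      by (rewrite <- Hperp; field).
    rewrite OA in H. apply Rmult_integral in H. destruct H as [H|H]; [|lra].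
    exfalso. assert (0 < 2 * r * sin th) by (apply Rmult_lt_0_compat; lra). lra. }
  set (p := P1 * d1 + P2 * d2 + P3 * d3).
  assert (HCS : p * p <= eps * eps * (r * r)).
  { set (q1 := P1 + -1 * (1 / 2 * (0 + 2 * r * sin th * a1))) in Hlen.
    set (q2 := P2 + -1 * (1 / 2 * (0 + 2 * r * sin th * a2))) in Hlen.
    set (q3 := P3 + -1 * (1 / 2 * (0 + 2 * r * sin th * a3))) in Hlen.
    assert (Hp : p = q1 * d1 + q2 * d2 + q3 * d3).
    { unfold p, q1, q2, q3. 
      transitivity (P1 * d1 + P2 * d2 + P3 * d3 - r * sin th * (d1 * a1 + d2 * a2 + d3 * a3)).
      - rewrite OAD. ring.
      - field. }
    rewrite Hp, <- Hlen, <- OD.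
    pose proof (Rle_0_sqr (q1*d2 - q2*d1)). pose proof (Rle_0_sqr (q1*d3 - q3*d1)).
    pose proof (Rle_0_sqr (q2*d3 - q3*d2)). unfold Rsqr in *.
    assert (Id : (q1 * q1 + q2 * q2 + q3 * q3) * (d1 * d1 + d2 * d2 + d3 * d3) -
      (q1 * d1 + q2 * d2 + q3 * d3) * (q1 * d1 + q2 * d2 + q3 * d3) =
      (q1*d2 - q2*d1)*(q1*d2 - q2*d1) + (q1*d3 - q3*d1)*(q1*d3 - q3*d1) + (q2*d3 - q3*d2)*(q2*d3 - q3*d2)) by ring.
    lra. }
  assert (Htri' : forall t, a <= t <= b -> exists l1 l2 l3, 0 <= l1 /\ 0 <= l2 /\ 0 <= l3 /\ l1 + l2 + l3 = 1 /\
     l3 * p = (cos (w * (t - tm)) - cos th) * (r * r) /\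
     r * (sin (w * (t - tm)) + sin th) = 2 * l2 * r * sin th + l3 * r * sin th).
  { intros t Ht. destruct (Htri t Ht) as [l1 [l2 [l3 [Hl1 [Hl2 [Hl3 [Hsum Heq]]]]]]].
    exists l1, l2, l3. repeat split; auto.
    all: rewrite Hba, Hbb in Heq.
    all: pose proof (f_equal vx Heq) as E1; pose proof (f_equal vy Heq) as E2; pose proof (f_equal vz Heq) as E3.
    all: destruct (Hrep t Ht) as [X1 [X2 X3]]; rewrite X1 in E1; rewrite X2 in E2; rewrite X3 in E3.
    all: unfold vadd, vscale, mkV, vx, vy, vz in E1, E2, E3; simpl in E1, E2, E3.
    all: edestruct (tri_alg a1 a2 a3 d1 d2 d3 P1 P2 P3 r (sin th) (cos (w * (t - tm)) - cos th) (sin (w * (t - tm)) + sin th) l2 l3 OA OD OAD HPa) as [R1 R2]; [lra|lra|lra|].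
    - exact R1.
    - exact R2. }
  assert (Hc1 : cos th < 1).
  { pose proof (sin2_cos2 th) as SC. unfold Rsqr in SC.
    assert (cos th * cos th < 1) by nra. nra. }
  assert (Hp0 : 0 < p).
  { destruct (Htri' tm ltac:(lra)) as [l1 [l2 [l3 [_ [_ [Hl3 [_ [E _]]]]]]]].
    rewrite Rminus_diag, Rmult_0_r, cos_0 in E.
    assert (0 < (1 - cos th) * (r * r)) by (apply Rmult_lt_0_compat; nra).
    destruct (Rlt_le_dec 0 p) as [Hq|Hq]; auto. nra. }
  assert (Hpe : p <= eps * r).
  { assert (0 < eps * r) by nra. nra. }
  assert (Hall : forall s, - th <= s <= th -> r * sin th * (cos s - cos th) <= eps * (sin th - sin s)).
  { intros s0 Hs0. set (t := tm + s0 / w).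
    assert (Ht : a <= t <= b).
    { unfold t. assert (- th / w <= s0 / w <= th / w).
      { split; apply Rmult_le_compat_r; try lra; left; apply Rinv_0_lt_compat; auto. }
      assert (th / w = (b - a) / 2) by (unfold th; field; lra). unfold tm. lra. }
    assert (Wt : w * (t - tm) = s0) by (unfold t; field; lra).
    destruct (Htri' t Ht) as [l1 [l2 [l3 [Hl1 [Hl2 [Hl3 [Hsum [E1 E2]]]]]]]].
    rewrite Wt in E1, E2.
    destruct (tri_ineq r (sin th) _ _ l1 l2 l3 p eps Hr Hs Hp0 Hpe Hl1 Hl2 Hl3 Hsum E1 E2) as [_ H].
    lra. }
  assert (Hlim := trig_ineq_limit th (r * sin th) eps Hth Hpi Hall).
  assert (Hcth : 0 < cos th).
  { assert (0 < r * sin th * sin th) by (apply Rmult_lt_0_compat; [apply Rmult_lt_0_compat|]; lra).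
    nra. }
  assert (Hpi2 : th < PI / 2).
  { destruct (Rlt_le_dec th (PI / 2)) as [H|H]; auto.
    assert (cos th <= 0) by (apply cos_le_0; lra). lra. }
  exists c, w, (mkV a1 a2 a3), (mkV (d1 / r) (d2 / r) (d3 / r)).
  split; [auto|]. split; [auto|]. split; [auto|]. split; [exact Hpi2|].
  split; [replace (c / w) with r by (unfold w; field; repeat split; apply Rgt_not_eq; lra); exact Hlim|].
  split; [unfold vdot, mkV, vx, vy, vz; simpl; lra|].
  split.
  { unfold vdot, mkV, vx, vy, vz; simpl.
    replace (d1 / r * (d1 / r) + d2 / r * (d2 / r) + d3 / r * (d3 / r)) with ((d1 * d1 + d2 * d2 + d3 * d3) / (r * r))
      by (field; apply Rgt_not_eq; lra).
    rewrite OD. field. apply Rgt_not_eq; lra. }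
  split.
  { unfold vdot, mkV, vx, vy, vz; simpl.
    replace (a1 * (d1 / r) + a2 * (d2 / r) + a3 * (d3 / r)) with ((d1 * a1 + d2 * a2 + d3 * a3) / r)
      by (field; apply Rgt_not_eq; lra).
    rewrite OAD. field. apply Rgt_not_eq; lra. }
  split; [exact Hc0|].
  intros t Ht. destruct (Hsol t Ht) as [S1 [S2 [S3 _]]].
  fold tm.
  apply V3_ext; [change (vx (alpha t)) with (A1 t); rewrite S1
    |change (vy (alpha t)) with (A2 t); rewrite S2|change (vz (alpha t)) with (A3 t); rewrite S3];
    unfold Asol, Co, Si; fold w; unfold vadd, vscale, mkV, vx, vy, vz; simpl; unfold a1, a2, a3, d1, d2, d3, Rdiv; ring.
Qed.


Definition Cont (h : R -> R) := forall y, continuous h y.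

Lemma Cont_mult u v : Cont u -> Cont v -> Cont (fun s => u s * v s).
Proof. intros Hu Hv y. exact (@continuous_mult R_UniformSpace R_AbsRing u v y (Hu y) (Hv y)). Qed.

Lemma Cont_plus u v : Cont u -> Cont v -> Cont (fun s => u s + v s).
Proof. intros Hu Hv y. exact (@continuous_plus R_UniformSpace R_AbsRing R_NormedModule u v y (Hu y) (Hv y)). Qed.

Lemma Cont_const k : Cont (fun _ => k).
Proof. intro y. apply continuous_const. Qed.

Lemma Cont_smooth h : smooth h -> Cont h.
Proof. intros H y. apply smooth_continuous; auto. Qed.

Lemma Cont_cos w tm : Cont (fun s => cos (w * (s - tm))).
Proof. intro y. apply (@ex_derive_continuous R_AbsRing R_NormedModule). auto_derive; auto. Qed.

Lemma Cont_sin w tm : Cont (fun s => sin (w * (s - tm))).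
Proof. intro y. apply (@ex_derive_continuous R_AbsRing R_NormedModule). auto_derive; auto. Qed.

Lemma Cont_ex_RInt h a b : Cont h -> ex_RInt h a b.
Proof. intro H. apply ex_RInt_cont. exact H. Qed.

Lemma RInt_lin2 (u v : R -> R) p q a t : Cont u -> Cont v ->
  RInt (fun s => u s * p + v s * q) a t = p * RInt u a t + q * RInt v a t.
Proof.
  intros Hu Hv.
  assert (E1 : RInt (fun s => u s * p) a t = p * RInt u a t).
  { rewrite (RInt_ext (fun s => u s * p) (fun s => scal p (u s))).
    - exact (RInt_scal (V:=R_CompleteNormedModule) u a t p (Cont_ex_RInt _ _ _ Hu)).
    - intros; unfold scal; simpl; unfold mult; simpl; ring. }
  assert (E2 : RInt (fun s => v s * q) a t = q * RInt v a t).
  { rewrite (RInt_ext (fun s => v s * q) (fun s => scal q (v s))).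
    - exact (RInt_scal (V:=R_CompleteNormedModule) v a t q (Cont_ex_RInt _ _ _ Hv)).
    - intros; unfold scal; simpl; unfold mult; simpl; ring. }
  rewrite <- E1, <- E2.
  apply (RInt_plus (fun s => u s * p) (fun s => v s * q));
    apply Cont_ex_RInt; apply Cont_mult; auto; apply Cont_const.
Qed.

Lemma RInt_split3 (h : R -> R) a t b : Cont h ->
  RInt h a t + RInt h t b = RInt h a b.
Proof. intro H. apply (RInt_Chasles h a t b); apply Cont_ex_RInt; auto. Qed.

Lemma trig_bounds th s : 0 < th < PI / 2 -> - th <= s <= th ->
  cos th <= cos s /\ 0 < cos s /\ - sin th <= sin s <= sin th.
Proof.
  intros Hth Hs. pose proof PI_RGT_0.
  split; [|split; [apply cos_gt_0; lra|]].
  - destruct (Rle_dec 0 s) as [H0|H0].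
    + destruct (Rle_lt_or_eq_dec _ _ (proj2 Hs)) as [H1|H1]; [|subst; lra].
      left. apply cos_decreasing_1; lra.
    + rewrite <- (cos_neg s).
      destruct (Rle_lt_or_eq_dec _ _ (proj1 Hs)) as [H1|H1]; [|rewrite <- H1, Ropp_involutive; lra].
      left. apply cos_decreasing_1; lra.
  - split.
    + rewrite <- sin_neg. destruct (Rle_lt_or_eq_dec _ _ (proj1 Hs)) as [H1|H1]; [|subst; lra].
      left. apply sin_increasing_1; lra.
    + destruct (Rle_lt_or_eq_dec _ _ (proj2 Hs)) as [H1|H1]; [|subst; lra].
      left. apply sin_increasing_1; lra.
Qed.

Lemma sin_sign_nonpos s : - PI <= s <= 0 -> sin s <= 0.
Proof. intro H. rewrite <- (Ropp_involutive s), sin_neg. pose proof (sin_ge_0 (- s)). lra. Qed.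

Lemma sin_sign_nonneg s : 0 <= s <= PI -> 0 <= sin s.
Proof. intro H. apply sin_ge_0; lra. Qed.

Definition XI (g : R -> R) w tm a t := RInt (fun s => g s * cos (w * (s - tm))) a t.
Definition YI (g : R -> R) w tm a t := RInt (fun s => g s * - sin (w * (s - tm))) a t.

Lemma Cont_X g w tm : Cont g -> Cont (fun s => g s * cos (w * (s - tm))).
Proof. intro H. apply Cont_mult; auto. apply Cont_cos. Qed.

Lemma Cont_Y g w tm : Cont g -> Cont (fun s => g s * - sin (w * (s - tm))).
Proof.
  intro H. apply Cont_mult; auto. intro y.
  apply (@ex_derive_continuous R_AbsRing R_NormedModule). auto_derive; auto.
Qed.

Lemma IC_rep (g : R -> R) alpha a b w tm (e1 e2 : V3) t : Cont g ->
  (forall s, a <= s <= b -> alpha s = vadd (vscale (cos (w * (s - tm))) e1) (vscale (- sin (w * (s - tm))) e2)) ->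
  a <= t <= b ->
  integral_curve g alpha a t = vadd (vscale (XI g w tm a t) e1) (vscale (YI g w tm a t) e2).
Proof.
  intros Hg Hal Ht.
  assert (Hin : forall s, Rmin a t < s < Rmax a t -> a <= s <= b).
  { intros s Hs. rewrite Rmin_left, Rmax_right in Hs by lra. lra. }
  apply V3_ext; [rewrite IC_x|rewrite IC_y|rewrite IC_z].
  - rewrite (RInt_ext _ (fun s => (g s * cos (w * (s - tm))) * vx e1 + (g s * - sin (w * (s - tm))) * vx e2)).
    + rewrite RInt_lin2 by (apply Cont_X || apply Cont_Y; auto).
      unfold vadd, vscale, mkV, vx, vy, vz, XI, YI; simpl. ring.
    + intros s Hs. rewrite (Hal s (Hin s Hs)). unfold vadd, vscale, mkV, vx, vy, vz; simpl. ring.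
  - rewrite (RInt_ext _ (fun s => (g s * cos (w * (s - tm))) * vy e1 + (g s * - sin (w * (s - tm))) * vy e2)).
    + rewrite RInt_lin2 by (apply Cont_X || apply Cont_Y; auto).
      unfold vadd, vscale, mkV, vx, vy, vz, XI, YI; simpl. ring.
    + intros s Hs. rewrite (Hal s (Hin s Hs)). unfold vadd, vscale, mkV, vx, vy, vz; simpl. ring.
  - rewrite (RInt_ext _ (fun s => (g s * cos (w * (s - tm))) * vz e1 + (g s * - sin (w * (s - tm))) * vz e2)).
    + rewrite RInt_lin2 by (apply Cont_X || apply Cont_Y; auto).
      unfold vadd, vscale, mkV, vx, vy, vz, XI, YI; simpl. ring.
    + intros s Hs. rewrite (Hal s (Hin s Hs)). unfold vadd, vscale, mkV, vx, vy, vz; simpl. ring.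
Qed.

Lemma YI_sym (g : R -> R) w a b : a <= b -> Cont g ->
  (forall s, a <= s <= b -> g (a + b - s) = g s) ->
  YI g w ((a + b) / 2) a b = 0.
Proof.
  intros Hab Hg Hs. unfold YI.
  set (h := fun s => g s * - sin (w * (s - (a + b) / 2))).
  assert (Hc : Cont h) by (apply Cont_Y; auto).
  pose proof (RInt_comp_lin h (-1) (a + b) a b (Cont_ex_RInt _ _ _ Hc)) as H.
  replace (-1 * a + (a + b)) with b in H by ring. replace (-1 * b + (a + b)) with a in H by ring.
  rewrite <- (opp_RInt_swap h a b (Cont_ex_RInt _ _ _ Hc)) in H.
  rewrite (RInt_ext _ h) in H.
  - unfold opp in H; simpl in H. fold h. lra.
  - intros x Hx. rewrite Rmin_left, Rmax_right in Hx by lra.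
    unfold h, scal; simpl; unfold mult; simpl.
    replace (-1 * x + (a + b)) with (a + b - x) by ring. rewrite Hs by lra.
    replace (w * (a + b - x - (a + b) / 2)) with (- (w * (x - (a + b) / 2))) by field.
    rewrite sin_neg. ring.
Qed.


Definition bmp a b d t := stp ((t - a - d) / d) + stp ((b - d - t) / d) - 1.

Lemma bmp_smooth a b d : 0 < d -> smooth (bmp a b d).
Proof.
  intro Hd. unfold bmp.
  apply (smooth_plus (fun t => stp ((t - a - d) / d) + stp ((b - d - t) / d)) (fun _ => -1)); [|apply smooth_const].
  apply smooth_plus.
  - apply (smooth_ext (fun t => stp (/ d * t + (- (a + d) / d)))); [intro t; f_equal; field; lra|].
    apply smooth_comp_affine, stp_smooth.
  - apply (smooth_ext (fun t => stp (- / d * t + ((b - d) / d)))); [intro t; f_equal; field; lra|].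
    apply smooth_comp_affine, stp_smooth.
Qed.

Lemma div_ge1 x d : 0 < d -> d <= x -> 1 <= x / d.
Proof. intros Hd H. apply (Rmult_le_reg_r d); auto. unfold Rdiv. rewrite Rmult_assoc, Rinv_l by lra. lra. Qed.

Lemma div_le0 x d : 0 < d -> x <= 0 -> x / d <= 0.
Proof. intros Hd H. unfold Rdiv. assert (0 < / d) by (apply Rinv_0_lt_compat; auto). nra. Qed.

Lemma bmp_range a b d t : 0 < d -> 4 * d <= b - a -> 0 <= bmp a b d t <= 1.
Proof.
  intros Hd Hab. unfold bmp.
  destruct (Rle_dec t (b - 2 * d)) as [H|H].
  - rewrite (stp_ge1 ((b - d - t) / d)) by (apply div_ge1; lra).
    pose proof (stp_range ((t - a - d) / d)). lra.
  - rewrite (stp_ge1 ((t - a - d) / d)) by (apply div_ge1; lra).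
    pose proof (stp_range ((b - d - t) / d)). lra.
Qed.

Lemma bmp_left a b d t : 0 < d -> 4 * d <= b - a -> t <= a + d -> bmp a b d t = 0.
Proof.
  intros Hd Hab Ht. unfold bmp.
  rewrite (stp_ge1 ((b - d - t) / d)) by (apply div_ge1; lra).
  rewrite stp_le0 by (apply div_le0; lra). ring.
Qed.

Lemma bmp_right a b d t : 0 < d -> 4 * d <= b - a -> b - d <= t -> bmp a b d t = 0.
Proof.
  intros Hd Hab Ht. unfold bmp.
  rewrite (stp_ge1 ((t - a - d) / d)) by (apply div_ge1; lra).
  rewrite (stp_le0 ((b - d - t) / d)) by (apply div_le0; lra). ring.
Qed.

Lemma bmp_mid a b d t : 0 < d -> a + 2 * d <= t <= b - 2 * d -> bmp a b d t = 1.
Proof.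
  intros Hd Ht. unfold bmp.
  rewrite (stp_ge1 ((t - a - d) / d)) by (apply div_ge1; lra).
  rewrite (stp_ge1 ((b - d - t) / d)) by (apply div_ge1; lra). ring.
Qed.

Lemma bmp_sym a b d t : bmp a b d (a + b - t) = bmp a b d t.
Proof.
  unfold bmp. replace (a + b - t - a - d) with (b - d - t) by ring.
  replace (b - d - (a + b - t)) with (t - a - d) by ring. ring.
Qed.


Lemma vdot_comb_e1 x y (e1 e2 : V3) :
  vdot (vadd (vscale x e1) (vscale y e2)) e1 = x * vdot e1 e1 + y * vdot e1 e2.
Proof. unfold vdot, vadd, vscale, mkV, vx, vy, vz; simpl. ring. Qed.

Lemma RInt_cmul (u : R -> R) k a b : Cont u -> RInt (fun s => k * u s) a b = k * RInt u a b.
Proof.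
  intro Hu. rewrite (RInt_ext _ (fun s => u s * k + (fun _ => 0) s * 0)).
  - rewrite RInt_lin2 by (auto; apply Cont_const). rewrite Rmult_0_l, Rplus_0_r; reflexivity.
  - intros x _. rewrite Rmult_0_l, Rplus_0_r. apply Rmult_comm.
Qed.

Lemma RInt_pos_lt (h : R -> R) s t : s < t -> Cont h -> (forall x, s < x < t -> 0 < h x) -> 0 < RInt h s t.
Proof.
  intros Hst Hc Hp.
  assert (H : RInt (fun _ => 0) s t < RInt h s t).
  { apply RInt_lt; auto. intros; apply Cont_const. }
  rewrite (RInt_zero_ext (fun _ => 0) s t) in H by auto. exact H.
Qed.

Lemma RInt_nonneg (h : R -> R) s t : s <= t -> Cont h -> (forall x, s < x < t -> 0 <= h x) -> 0 <= RInt h s t.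
Proof. intros Hst Hc Hp. apply RInt_ge_0; auto. apply Cont_ex_RInt; auto. Qed.

Lemma RInt_nonpos (h : R -> R) s t : s <= t -> Cont h -> (forall x, s < x < t -> h x <= 0) -> RInt h s t <= 0.
Proof.
  intros Hst Hc Hp.
  assert (H : RInt h s t <= RInt (fun _ => 0) s t).
  { apply RInt_le; [lra | apply Cont_ex_RInt; auto | apply Cont_ex_RInt; apply Cont_const | auto]. }
  rewrite (RInt_zero_ext (fun _ => 0) s t) in H by auto. exact H.
Qed.

Lemma RInt_le_const (h : R -> R) s t K : s <= t -> Cont h -> (forall x, s < x < t -> h x <= K) -> RInt h s t <= K * (t - s).
Proof.
  intros Hst Hc Hp.
  assert (H : RInt h s t <= RInt (fun _ => K) s t).
  { apply RInt_le; [lra | apply Cont_ex_RInt; auto | apply Cont_ex_RInt; apply Cont_const | auto]. }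
  rewrite RInt_const in H. unfold scal in H; simpl in H; unfold mult in H; simpl in H. lra.
Qed.

Theorem lemma6 (a b eps : R) (alpha : R -> V3) (f : R -> R) :
  a < b ->
  smooth3 alpha ->
  (forall t, a <= t <= b -> on_S2 (alpha t)) ->
  smooth f ->
  (forall t, a <= t <= b -> 0 < f t) ->
  round_suspension (integral_curve f alpha a) a b eps ->
  forall k : R, 1/2 <= k <= 3/2 ->
  exists g : R -> R,
    smooth g /\
    (forall t, a <= t <= b -> 0 < g t) /\
    (exists delta : R, 0 < delta /\
       forall t, a <= t <= b -> (t < a + delta \/ b - delta < t) -> g t = f t) /\
    suspension (integral_curve g alpha a) a b (k * eps) /\
    vsub (integral_curve g alpha a b) (integral_curve g alpha a a)
      = vscale k (vsub (integral_curve f alpha a b) (integral_curve f alpha a a)).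
Proof.
  intros Hab Hsm HS2 Hf Hfpos Hround k Hk.
  destruct (geometry a b eps alpha f Hab Hsm HS2 Hf Hfpos Hround)
    as [c [w [e1 [e2 [Hc [Hw [Heps [Hpi2 [Hkey [H11 [H22 [H12 [Hfc Hal]]]]]]]]]]]]].
  set (tm := (a + b) / 2) in *.
  set (th := w * (b - a) / 2) in *.
  assert (Hth : 0 < th) by (unfold th; nra).
  set (kap := c / w * sin th).
  assert (Hsth : 0 < sin th) by (apply sin_gt_0; pose proof PI_RGT_0; lra).
  assert (Hkap : 0 < kap) by (unfold kap; apply Rmult_lt_0_compat; [apply Rdiv_lt_0_compat|]; auto).
  assert (Hrange : forall t, a <= t <= b -> - th <= w * (t - tm) <= th).
  { intros t Ht. unfold th, tm.
    assert (0 <= w * (t - a)) by (apply Rmult_le_pos; lra).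
    assert (0 <= w * (b - t)) by (apply Rmult_le_pos; lra).
    assert (w * (t - (a + b) / 2) = w * (t - a) - w * (b - a) / 2) by field.
    assert (w * (t - (a + b) / 2) = w * (b - a) / 2 - w * (b - t)) by field.
    lra. }
  assert (Hrange' : forall t, a < t < b -> - th <= w * (t - tm) <= th).
  { intros t Ht. apply Hrange. lra. }
  assert (Hpt : forall t, a < t < b ->
     cos th <= cos (w * (t - tm)) /\ 0 < cos (w * (t - tm)) /\
     - sin th <= sin (w * (t - tm)) <= sin th).
  { intros t Ht. apply trig_bounds; [lra|]. apply Hrange'; auto. }
  assert (Hslope : forall t, a < t < b ->
     kap * sin (w * (t - tm)) <= eps * cos (w * (t - tm)) /\
     - (kap * sin (w * (t - tm))) <= eps * cos (w * (t - tm))).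
  { intros t Ht. destruct (Hpt t Ht) as [P1 [P2 P3]].
    assert (kap * sin th <= eps * cos th) by (unfold kap; lra).
    assert (eps * cos th <= eps * cos (w * (t - tm))) by (apply Rmult_le_compat_l; lra).
    assert (kap * sin (w * (t - tm)) <= kap * sin th) by (apply Rmult_le_compat_l; lra).
    assert (- (kap * sin (w * (t - tm))) <= kap * sin th) by nra.
    split; lra. }
  set (I0 := RInt (fun t => cos (w * (t - tm))) a b).
  assert (HI0 : 0 < I0).
  { apply RInt_pos_lt; auto. apply Cont_cos. intros x Hx. apply (Hpt x Hx). }
  assert (HI0b : I0 <= b - a).
  { unfold I0. pose proof (RInt_le_const (fun t => cos (w * (t - tm))) a b 1 ltac:(lra) (Cont_cos w tm)) as H.
    assert (b - a = 1 * (b - a)) by ring. rewrite H0. apply H. intros; apply COS_bound. }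
  assert (HI0v : c * I0 = 2 * kap).
  { unfold I0, kap.
    assert (HR : is_RInt (fun t => cos (w * (t - tm))) a b
                   (minus (sin (w * (b - tm)) / w) (sin (w * (a - tm)) / w))).
    { apply (is_RInt_derive (fun t => sin (w * (t - tm)) / w)).
      - intros x _. auto_derive; auto. unfold Rminus. field. lra.
      - intros x _. apply Cont_cos. }
    rewrite (is_RInt_unique _ _ _ _ HR).
    assert (w * (b - tm) = th) by (unfold th, tm; field).
    assert (w * (a - tm) = - th) by (unfold th, tm; field).
    rewrite H, H0, sin_neg. unfold minus, plus, opp; simpl. field. lra. }
  set (d := I0 / 16).
  assert (Hd : 0 < d) by (unfold d; lra).
  assert (Hd4 : 4 * d <= b - a) by (unfold d; lra).
  set (B := bmp a b d).
  assert (HBr : forall t, 0 <= B t <= 1) by (intro t; apply bmp_range; auto).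
  set (I1 := RInt (fun t => B t * cos (w * (t - tm))) a b).
  assert (HCB : Cont B) by (apply Cont_smooth, bmp_smooth; auto).
  assert (HI01 : I0 - I1 <= 4 * d).
  { set (h := fun t => (1 - B t) * cos (w * (t - tm))).
    assert (Hh : Cont h).
    { apply Cont_mult; [apply Cont_plus; [apply Cont_const|] |apply Cont_cos].
      intro y. apply (continuous_opp B y). apply HCB. }
    assert (E : I0 - I1 = RInt h a b).
    { unfold I0, I1. rewrite (RInt_ext h (fun s => cos (w * (s - tm)) * 1 + (B s * cos (w * (s - tm))) * (-1))).
      - rewrite RInt_lin2; [ring| apply Cont_cos | apply Cont_mult; auto; apply Cont_cos].
      - intros x _. unfold h. apply Rminus_diag_uniq. ring. }
    rewrite E.
    rewrite <- (RInt_split3 h a (b - 2 * d) b Hh), <- (RInt_split3 h a (a + 2 * d) (b - 2 * d) Hh).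
    assert (R1 : RInt h a (a + 2 * d) <= 1 * (a + 2 * d - a)).
    { apply RInt_le_const; auto; [lra|]. intros x Hx. unfold h.
      destruct (Hpt x ltac:(lra)) as [_ [P2 _]]. pose proof (COS_bound (w * (x - tm))). pose proof (HBr x). nra. }
    assert (R2 : RInt h (a + 2 * d) (b - 2 * d) <= 0 * (b - 2 * d - (a + 2 * d))).
    { apply RInt_le_const; auto; [lra|]. intros x Hx. unfold h. unfold B. rewrite bmp_mid by (auto; lra). lra. }
    assert (R3 : RInt h (b - 2 * d) b <= 1 * (b - (b - 2 * d))).
    { apply RInt_le_const; auto; [lra|]. intros x Hx. unfold h.
      destruct (Hpt x ltac:(lra)) as [_ [P2 _]]. pose proof (COS_bound (w * (x - tm))). pose proof (HBr x). nra. }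
    lra. }
  assert (HI1 : 3 * I0 / 4 <= I1) by (unfold d in HI01; lra).
  set (mu := (k - 1) * I0 / I1).
  assert (Hmu : - 2 / 3 <= mu).
  { unfold mu. assert (0 < I1) by lra.
    destruct (Rle_dec 1 k).
    - assert (0 <= (k - 1) * I0 / I1); [|lra]. apply Rdiv_le_0_compat; [nra|lra].
    - apply (Rmult_le_reg_r I1); [lra|].
      replace ((k - 1) * I0 / I1 * I1) with ((k - 1) * I0) by (field; apply Rgt_not_eq; lra). nra. }
  assert (HmuI : mu * I1 = (k - 1) * I0) by (unfold mu; field; apply Rgt_not_eq; lra).
  set (g := fun t => c + c * mu * B t).
  assert (Hgpos : forall t, 0 < g t).
  { intro t. unfold g. pose proof (HBr t). assert (-2/3 <= mu * B t) by nra. nra. }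
  assert (Hgs : smooth g).
  { unfold g. apply smooth_plus; [apply smooth_const|]. apply smooth_scal. apply bmp_smooth; auto. }
  assert (Hgc : Cont g) by (apply Cont_smooth; auto).
  assert (Hgsym : forall t, a <= t <= b -> g (a + b - t) = g t).
  { intros t _. unfold g, B. rewrite bmp_sym. reflexivity. }
  set (X := XI g w tm a). set (Y := YI g w tm a).
  assert (Hrep : forall t, a <= t <= b -> integral_curve g alpha a t = vadd (vscale (X t) e1) (vscale (Y t) e2)).
  { intros t Ht. apply IC_rep with (b := b); auto. }
  assert (Hbeta : forall t, a <= t <= b -> integral_curve f alpha a t =
     vadd (vscale (XI (fun _ => c) w tm a t) e1) (vscale (YI (fun _ => c) w tm a t) e2)).
  { intros t Ht. rewrite <- (IC_rep (fun _ => c) alpha a b w tm e1 e2 t (Cont_const c) Hal Ht).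
    assert (Hin : forall s, Rmin a t < s < Rmax a t -> f s = c).
    { intros s Hs. rewrite Rmin_left, Rmax_right in Hs by lra. apply Hfc. lra. }
    apply V3_ext; rewrite ?IC_x, ?IC_y, ?IC_z; apply RInt_ext; intros s Hs; rewrite Hin; auto. }
  assert (YgB : Y b = 0) by (apply YI_sym; auto; lra).
  assert (YcB : YI (fun _ => c) w tm a b = 0) by (apply YI_sym; [lra|apply Cont_const|auto]).
  assert (XcB : XI (fun _ => c) w tm a b = c * I0) by (unfold XI; apply RInt_cmul, Cont_cos).
  assert (XgB : X b = k * c * I0).
  { unfold X, XI, g.
    rewrite (RInt_ext _ (fun s => cos (w * (s - tm)) * c + (B s * cos (w * (s - tm))) * (c * mu))).
    - rewrite RInt_lin2; [| apply Cont_cos | apply Cont_mult; auto; apply Cont_cos].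
      fold I0 I1. replace (c * mu * I1) with (c * (mu * I1)) by ring. rewrite HmuI. apply Rminus_diag_uniq. ring.
    - intros x _. apply Rminus_diag_uniq. ring. }
  set (L := k * c * I0).
  assert (HL : L = 2 * k * kap) by (unfold L; replace (2 * k * kap) with (k * (2 * kap)) by ring; rewrite <- HI0v; ring).
  assert (Hk0 : 0 < k) by lra.
  assert (HLp : 0 < L) by (rewrite HL; nra).
  assert (Hga : integral_curve g alpha a a = mkV 0 0 0) by apply IC_at_a.
  assert (Hgb : integral_curve g alpha a b = vadd (vscale L e1) (vscale 0 e2)).
  { rewrite Hrep by lra. rewrite XgB, YgB. reflexivity. }
  exists g. split; [exact Hgs|]. split; [intros; apply Hgpos|].
  split.
  { exists d. split; auto. intros t Ht Hor. rewrite Hfc by auto. unfold g, B.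
    destruct Hor as [Ho|Ho]; [rewrite bmp_left by (auto; lra)|rewrite bmp_right by (auto; lra)]; ring. }
  split.
  2: { rewrite Hga, IC_at_a, Hgb, Hbeta by lra. rewrite YcB, XcB.
       apply V3_ext; unfold vsub, vadd, vscale, mkV, vx, vy, vz, L; simpl; ring. }
  set (hX := fun s => g s * cos (w * (s - tm))).
  set (hY := fun s => g s * - sin (w * (s - tm))).
  assert (ChX : Cont hX) by (apply Cont_X; auto).
  assert (ChY : Cont hY) by (apply Cont_Y; auto).
  assert (SX : forall s t, X s + RInt hX s t = X t) by (intros; apply RInt_split3; auto).
  assert (SY : forall s t, Y s + RInt hY s t = Y t) by (intros; apply RInt_split3; auto).
  assert (Xmono : forall s t, a <= s -> s < t -> t <= b -> X s < X t).
  { intros s t Hs Hst Htb. rewrite <- (SX s t).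
    assert (0 < RInt hX s t); [|lra].
    apply RInt_pos_lt; auto. intros x Hx. unfold hX.
    destruct (Hpt x ltac:(lra)) as [_ [P2 _]]. apply Rmult_lt_0_compat; auto. }
  assert (T2 : forall t, a <= t <= b -> 0 <= eps * X t - kap * Y t).
  { intros t Ht.
    assert (E : eps * X t - kap * Y t = RInt (fun s => hX s * eps + hY s * (- kap)) a t).
    { rewrite RInt_lin2 by auto. unfold X, Y, XI, YI. fold hX hY. ring. }
    rewrite E. apply RInt_nonneg; [lra| apply Cont_plus; apply Cont_mult; auto; apply Cont_const|].
    intros x Hx. unfold hX, hY. destruct (Hslope x ltac:(lra)) as [_ S2].
    pose proof (Hgpos x). nra. }
  assert (T3 : forall t, a <= t <= b -> 0 <= eps * (L - X t) - kap * Y t).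
  { intros t Ht.
    assert (E : eps * (L - X t) - kap * Y t = RInt (fun s => hX s * eps + hY s * kap) t b).
    { rewrite RInt_lin2 by auto. pose proof (SX t b) as A1. pose proof (SY t b) as A2.
      fold L in XgB. rewrite XgB in A1. rewrite YgB in A2.
      assert (Q1 : RInt hX t b = L - X t) by lra. assert (Q2 : RInt hY t b = - Y t) by lra.
      rewrite Q1, Q2. ring. }
    rewrite E. apply RInt_nonneg; [lra| apply Cont_plus; apply Cont_mult; auto; apply Cont_const|].
    intros x Hx. unfold hX, hY. destruct (Hslope x ltac:(lra)) as [S1 _].
    pose proof (Hgpos x). nra. }
  assert (T1 : forall t, a <= t <= b -> 0 <= Y t).
  { intros t Ht. destruct (Rle_dec t tm) as [Htm|Htm].
    - unfold Y, YI. fold hY. apply RInt_nonneg; [lra|auto|].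
      intros x Hx. unfold hY.
      assert (w * (x - tm) <= 0) by nra.
      assert (sin (w * (x - tm)) <= 0).
      { apply sin_sign_nonpos. pose proof (Hrange' x ltac:(lra)). pose proof PI_RGT_0. lra. }
      pose proof (Hgpos x). nra.
    - pose proof (SY t b) as A2. rewrite YgB in A2.
      assert (RInt hY t b <= 0); [|lra].
      apply RInt_nonpos; [lra|auto|].
      intros x Hx. unfold hY.
      assert (0 <= w * (x - tm)) by (apply Rmult_le_pos; lra).
      assert (0 <= sin (w * (x - tm))).
      { apply sin_sign_nonneg. pose proof (Hrange' x ltac:(lra)). pose proof PI_RGT_0. lra. }
      pose proof (Hgpos x). nra. }
  assert (Xdot : forall t, a <= t <= b -> vdot (integral_curve g alpha a t) e1 = X t).
  { intros t Ht. rewrite Hrep by auto. rewrite vdot_comb_e1, H11, H12. ring. }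
  unfold suspension. split; [nra|].
  split.
  { intro Heq. pose proof (f_equal (fun v => vdot v e1) Heq) as Hdd. cbv beta in Hdd.
    rewrite Hga in Hdd. rewrite (Xdot b) in Hdd by lra. fold L in XgB.
    unfold vdot, mkV, vx, vy, vz in Hdd; simpl in Hdd. lra. }
  split.
  { split; [|split].
    - destruct Hsm as [Sx [Sy Sz]]. split; [|split].
      + apply (smooth_ext (fun t => RInt (fun s => g s * vx (alpha s)) a t)); [intro; reflexivity|].
        apply smooth_RInt, smooth_mult; auto.
      + apply (smooth_ext (fun t => RInt (fun s => g s * vy (alpha s)) a t)); [intro; reflexivity|].
        apply smooth_RInt, smooth_mult; auto.
      + apply (smooth_ext (fun t => RInt (fun s => g s * vz (alpha s)) a t)); [intro; reflexivity|].
        apply smooth_RInt, smooth_mult; auto.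
    - intros s t Hs Ht Heq.
      pose proof (f_equal (fun v => vdot v e1) Heq) as Hdd. cbv beta in Hdd.
      rewrite !Xdot in Hdd by auto.
      destruct (Rtotal_order s t) as [Hlt|[Heq'|Hgt]]; auto.
      + pose proof (Xmono s t ltac:(lra) Hlt ltac:(lra)). lra.
      + pose proof (Xmono t s ltac:(lra) Hgt ltac:(lra)). lra.
    - intros t Ht Hdd. rewrite vderiv_IC in Hdd by auto.
      pose proof (f_equal vx Hdd) as D1. pose proof (f_equal vy Hdd) as D2. pose proof (f_equal vz Hdd) as D3.
      unfold mkV, vx, vy, vz in D1, D2, D3; simpl in D1, D2, D3.
      pose proof (norm_eq _ 1 ltac:(lra) (HS2 t Ht)) as U. unfold vdot, vx, vy, vz in U.
      pose proof (Hgpos t) as G.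
      assert (fst (fst (alpha t)) = 0) by (apply (Rmult_eq_reg_l (g t)); [rewrite Rmult_0_r; exact D1|lra]).
      assert (snd (fst (alpha t)) = 0) by (apply (Rmult_eq_reg_l (g t)); [rewrite Rmult_0_r; exact D2|lra]).
      assert (snd (alpha t) = 0) by (apply (Rmult_eq_reg_l (g t)); [rewrite Rmult_0_r; exact D3|lra]).
      rewrite H, H0, H1 in U. lra. }
  exists (vadd (vscale (L / 2) e1) (vscale (k * eps) e2)).
  assert (Hke : 0 < k * eps) by nra.
  split.
  { unfold isosceles_apex. rewrite Hga, Hgb.
    assert (E1 : vsub (vadd (vscale (L / 2) e1) (vscale (k * eps) e2))
       (vscale (1 / 2) (vadd (mkV 0 0 0) (vadd (vscale L e1) (vscale 0 e2)))) = vscale (k * eps) e2).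
    { apply V3_ext; unfold vsub, vadd, vscale, mkV, vx, vy, vz; simpl; apply Rminus_diag_uniq; field. }
    assert (E2 : vsub (vadd (vscale L e1) (vscale 0 e2)) (mkV 0 0 0) = vscale L e1).
    { apply V3_ext; unfold vsub, vadd, vscale, mkV, vx, vy, vz; simpl; apply Rminus_diag_uniq; field. }
    rewrite E1, E2. split.
    - replace (vdot (vscale (k * eps) e2) (vscale L e1)) with (k * eps * L * vdot e1 e2)
        by (unfold vdot, vscale, mkV, vx, vy, vz; simpl; ring).
      rewrite H12. ring.
    - unfold vnorm. replace (vdot (vscale (k * eps) e2) (vscale (k * eps) e2)) with ((k * eps) * (k * eps) * vdot e2 e2)
        by (unfold vdot, vscale, mkV, vx, vy, vz; simpl; ring).
      rewrite H22, Rmult_1_r. apply sqrt_square. lra. }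
  intros t Ht. rewrite Hga, Hgb, (Hrep t Ht).
  pose proof (T1 t Ht). pose proof (T2 t Ht). pose proof (T3 t Ht).
  assert (HeL : 0 < eps * L) by nra.
  exists ((eps * (L - X t) - kap * Y t) / (eps * L)), ((eps * X t - kap * Y t) / (eps * L)), (Y t / (k * eps)).
  split; [apply Rdiv_le_0_compat; lra|].
  split; [apply Rdiv_le_0_compat; lra|].
  split; [apply Rdiv_le_0_compat; lra|].
  split.
  { rewrite HL. field. repeat split; apply Rgt_not_eq; lra. }
  apply V3_ext; unfold vsub, vadd, vscale, mkV, vx, vy, vz; simpl; rewrite HL;
    apply Rminus_diag_uniq; field; repeat split; apply Rgt_not_eq; lra.
Qed.
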